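(* Let $\lambda,\mu\in C^1([-1,1])$ be positive functions with $\lambda(w)=\mu(-w)$ for all $w\in[-1,1]$, and let $b,c\in C([-1,1])$. Let $E=\{(z,w)\in[-1,1]^2:\ |z|\le |w|\}$. Then the system $$\lambda(w)L^{11}_w(z,w)+\lambda(z)L^{11}_z(z,w)=-\lambda'(z)L^{11}(z,w)-c(z)L^{12}(z,w),$$ $$\lambda(w)L^{12}_w(z,w)-\mu(z)L^{12}_z(z,w)=-b(z)L^{11}(z,w)+\mu'(z)L^{12}(z,w),$$ $$L^{11}(-w,w)=0,\qquad L^{12}(w,w)=h_1(w):=\frac{b(w)}{\lambda(w)+\mu(w)},$$ together with the system $$\mu(w)L^{22}_w(z,w)+\mu(z)L^{22}_z(z,w)=b(z)L^{21}(z,w)-\mu'(z)L^{22}(z,w),$$ $$\mu(w)L^{21}_w(z,w)-\lambda(z)L^{21}_z(z,w)=\lambda'(z)L^{21}(z,w)+c(z)L^{22}(z,w),$$ $$L^{22}(-w,w)=0,\qquad L^{21}(w,w)=h_2(w):=-\frac{c(w)}{\lambda(w)+\mu(w)},$$ posed on $E$, has a unique solution $L^{11},L^{12},L^{21},L^{22}\in C(E)$ (understood as solutions of the equivalent integral equations obtained by integrating along characteristics).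
   Context: $E$ is the union of $E_1=\{(z,w):0\le w\le 1,\ -w\le z\le w\}$ and $E_2=\{(z,w):-1\le w\le 0,\ w\le z\le -w\}$. *)

(* Defs.v *)
From Stdlib Require Import Reals.
From Coquelicot Require Import Coquelicot.
Open Scope R_scope.

Definition inI (a b x : R) : Prop := a <= x <= b.

Definition cont_on (a b : R) (f : R -> R) : Prop :=
  forall x, inI a b x -> forall eps, 0 < eps -> exists delta, 0 < delta /\
    forall y, inI a b y -> Rabs (y - x) < delta -> Rabs (f y - f x) < eps.

Definition has_deriv_on (a b : R) (f df : R -> R) : Prop :=
  forall x, inI a b x -> forall eps, 0 < eps -> exists delta, 0 < delta /\
    forall y, inI a b y -> y <> x -> Rabs (y - x) < delta ->
      Rabs ((f y - f x) / (y - x) - df x) < eps.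

Definition C1_on (a b : R) (f df : R -> R) : Prop :=
  has_deriv_on a b f df /\ cont_on a b df.

Definition inE (z w : R) : Prop :=
  -1 <= z <= 1 /\ -1 <= w <= 1 /\ Rabs z <= Rabs w.

Definition cont_on_E (L : R -> R -> R) : Prop :=
  forall z w, inE z w -> forall eps, 0 < eps -> exists delta, 0 < delta /\
    forall z' w', inE z' w' -> Rabs (z' - z) < delta -> Rabs (w' - w) < delta ->
      Rabs (L z' w' - L z w) < eps.

(* A characteristic curve s |-> (zc s, wc s), s in [s0,s1], lying in E,
   of the vector field  (z,w) |-> (az z, aw w), i.e. of the operator
   aw(w) d/dw + az(z) d/dz. *)
Definition char_curve (az aw : R -> R) (s0 s1 : R) (zc wc : R -> R) : Prop :=
  s0 <= s1 /\
  has_deriv_on s0 s1 zc (fun s => az (zc s)) /\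
  has_deriv_on s0 s1 wc (fun s => aw (wc s)) /\
  (forall s, inI s0 s1 s -> inE (zc s) (wc s)).

(* Integral form of  aw(w) L_w + az(z) L_z = F(z,w)  on E: along every
   characteristic segment in E, the increment of L equals the integral of F. *)
Definition char_solution (az aw : R -> R) (L F : R -> R -> R) : Prop :=
  forall s0 s1 zc wc, char_curve az aw s0 s1 zc wc ->
    is_RInt (fun s => F (zc s) (wc s)) s0 s1 (L (zc s1) (wc s1) - L (zc s0) (wc s0)).

Definition is_solution (lam dlam mu dmu b c : R -> R)
    (L11 L12 L21 L22 : R -> R -> R) : Prop :=
  cont_on_E L11 /\ cont_on_E L12 /\ cont_on_E L21 /\ cont_on_E L22 /\
  (* lam(w) L11_w + lam(z) L11_z = -lam'(z) L11 - c(z) L12 *)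
  char_solution lam lam L11 (fun z w => - dlam z * L11 z w - c z * L12 z w) /\
  (* lam(w) L12_w - mu(z) L12_z = -b(z) L11 + mu'(z) L12 *)
  char_solution (fun z => - mu z) lam L12 (fun z w => - b z * L11 z w + dmu z * L12 z w) /\
  (* mu(w) L22_w + mu(z) L22_z = b(z) L21 - mu'(z) L22 *)
  char_solution mu mu L22 (fun z w => b z * L21 z w - dmu z * L22 z w) /\
  (* mu(w) L21_w - lam(z) L21_z = lam'(z) L21 + c(z) L22 *)
  char_solution (fun z => - lam z) mu L21 (fun z w => dlam z * L21 z w + c z * L22 z w) /\
  (forall w, inI (-1) 1 w -> L11 (- w) w = 0) /\
  (forall w, inI (-1) 1 w -> L12 w w = b w / (lam w + mu w)) /\
  (forall w, inI (-1) 1 w -> L22 (- w) w = 0) /\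
  (forall w, inI (-1) 1 w -> L21 w w = - (c w / (lam w + mu w))).

(* Main.v *)
Require Import Defs.
From Stdlib Require Import Reals Lra Lia Psatz ClassicalEpsilon Classical ZArith.
From Coquelicot Require Import Coquelicot.
Open Scope R_scope.

Module ModA.
Open Scope R_scope.

Definition cont1 (f : R -> R) := forall x eps, 0 < eps -> exists d, 0 < d /\
  forall y, Rabs (y - x) < d -> Rabs (f y - f x) < eps.
Definition cont2 (f : R -> R -> R) := forall z w eps, 0 < eps -> exists d, 0 < d /\
  forall z' w', Rabs (z' - z) < d -> Rabs (w' - w) < d -> Rabs (f z' w' - f z w) < eps.

Lemma cont1_pt f x : cont1 f -> continuity_pt f x.
Proof.
  intros H. unfold continuity_pt, continue_in, limit1_in, limit_in.
  intros eps He. destruct (H x eps He) as [d [Hd H']]. exists d; split; auto.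
  intros y [_ Hy]. simpl in *. unfold R_dist in *. apply H'; auto.
Qed.

Lemma cont1_continuous f x : cont1 f -> continuous f x.
Proof. intros H. apply continuity_pt_filterlim, cont1_pt; auto. Qed.

Definition clamp (lo hi x : R) := Rmax lo (Rmin hi x).

Lemma clamp_in lo hi x : lo <= hi -> lo <= clamp lo hi x <= hi.
Proof. intros. unfold clamp, Rmax, Rmin. repeat destruct Rle_dec; lra. Qed.

Lemma clamp_id lo hi x : lo <= x <= hi -> clamp lo hi x = x.
Proof. intros. unfold clamp, Rmax, Rmin. repeat destruct Rle_dec; lra. Qed.

Lemma clamp_lip lo hi x y : Rabs (clamp lo hi x - clamp lo hi y) <= Rabs (x - y).
Proof. unfold clamp, Rmax, Rmin. repeat destruct Rle_dec; split_Rabs; lra. Qed.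

Lemma cont_on_clamp a b f : a <= b -> cont_on a b f -> cont1 (fun x => f (clamp a b x)).
Proof.
  intros Hab H x eps He.
  destruct (H (clamp a b x) (clamp_in a b x Hab) eps He) as [d [Hd H']].
  exists d; split; auto. intros y Hy. apply H'.
  - apply clamp_in; auto.
  - eapply Rle_lt_trans; [apply clamp_lip|]; auto.
Qed.

Lemma cont1_cont_on a b f : cont1 f -> cont_on a b f.
Proof. intros H x _ eps He. destruct (H x eps He) as [d [Hd H']]. exists d; split; auto. Qed.

Lemma frac01 a b : 0 <= a <= b -> 0 < b -> 0 <= a / b <= 1.
Proof.
  intros H Hb. split.
  - apply Rdiv_le_0_compat; lra.
  - apply (Rmult_le_reg_r b); auto. unfold Rdiv. rewrite Rmult_assoc, Rinv_l; lra.
Qed.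

Lemma cont2_unif (f : R -> R -> R) lo hi : cont2 f -> forall eps, 0 < eps ->
  exists d, 0 < d /\ forall z w z' w', lo <= z <= hi -> lo <= w <= hi ->
    lo <= z' <= hi -> lo <= w' <= hi -> Rabs (z - z') < d -> Rabs (w - w') < d ->
    Rabs (f z w - f z' w') < eps.
Proof.
  intros Hf eps He.
  assert (Hd0 : forall u v, exists d : posreal, forall z' w', Rabs (z' - u) < d -> Rabs (w' - v) < d ->
     Rabs (f z' w' - f u v) < eps / 2).
  { intros u v. destruct (Hf u v (eps/2)) as [d [Hd H]]; [lra|].
    exists (mkposreal d Hd); auto. }
  set (dl := fun u v => proj1_sig (constructive_indefinite_description _ (Hd0 u v))).
  assert (Hdl : forall u v z' w', Rabs (z' - u) < dl u v -> Rabs (w' - v) < dl u v ->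
     Rabs (f z' w' - f u v) < eps / 2).
  { intros u v. unfold dl. destruct constructive_indefinite_description; simpl; auto. }
  assert (Hpos : forall u v, 0 < dl u v / 2) by (intros; destruct (dl u v); simpl; lra).
  destruct (compactness_value_2d lo hi lo hi (fun u v => mkposreal _ (Hpos u v))) as [d Hd].
  exists d; split; [destruct d; auto|].
  intros z w z' w' Hz Hw Hz' Hw' H1 H2.
  apply NNPP. intros Hn. apply (Hd z w (conj (proj1 Hz) (proj2 Hz)) (conj (proj1 Hw) (proj2 Hw))).
  intros [u [v [_ [_ [Hu [Hv Hdd]]]]]]. simpl in *. apply Hn. pose proof (Hpos u v).
  assert (A1 := Hdl u v z w ltac:(lra) ltac:(lra)).
  assert (A2 := Hdl u v z' w' ltac:(split_Rabs; lra) ltac:(split_Rabs; lra)).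
  split_Rabs; lra.
Qed.

Lemma cont2_bounded_r (f : R -> R -> R) r : 0 < r -> cont2 f ->
  exists B, 0 <= B /\ forall z w, -r <= z <= r -> -r <= w <= r -> Rabs (f z w) <= B.
Proof.
  intros Hr Hf. destruct (cont2_unif f (-r) r Hf 1 ltac:(lra)) as [d [Hd H]].
  destruct (archimed (2 * r / d)) as [Hn _].
  set (N := Z.to_nat (up (2 * r/d))).
  assert (Hq0 : 0 < 2 * r / d) by (apply Rdiv_lt_0_compat; lra).
  assert (HN : 2 * r / d < INR N).
  { unfold N. rewrite INR_IZR_INZ, Z2Nat.id; auto.
    apply le_IZR. lra. }
  assert (HN0 : (0 < N)%nat). { destruct N; simpl in HN; [lra|lia]. }
  exists (Rabs (f 0 0) + INR N). split; [pose proof (pos_INR N); pose proof (Rabs_pos (f 0 0)); lra|].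
  intros z w Hz Hw.
  assert (HNr : 0 < INR N) by (apply lt_0_INR; auto).
  assert (Hstep : r / INR N < d / 2).
  { replace (d/2) with (r / (2 * r / d)) by (field; lra).
    unfold Rdiv at 1 2. apply Rmult_lt_compat_l; auto.
    apply Rinv_lt_contravar; auto. apply Rmult_lt_0_compat; auto. }
  assert (Hk : forall k, (k <= N)%nat ->
     Rabs (f (INR k / INR N * z) (INR k / INR N * w) - f 0 0) <= INR k).
  { induction k; intros Hk.
    - simpl. unfold Rdiv. rewrite !Rmult_0_l. rewrite Rminus_diag, Rabs_R0. lra.
    - assert (IH := IHk ltac:(lia)). rewrite S_INR.
      assert (Hkn : INR k + 1 <= INR N) by (rewrite <- S_INR; apply le_INR; auto).
      assert (Hk0 := pos_INR k).
      assert (Hr1 : 0 <= INR k / INR N <= 1) by (apply frac01; lra).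
      assert (Hr2 : 0 <= (INR k + 1) / INR N <= 1) by (apply frac01; lra).
      assert (Hb1 : forall q x, 0 <= q <= 1 -> -r <= x <= r -> -r <= q * x <= r) by (intros; split_Rabs; nra).
      assert (Hc : Rabs (f ((INR k + 1) / INR N * z) ((INR k + 1) / INR N * w) -
                         f (INR k / INR N * z) (INR k / INR N * w)) < 1).
      { apply H; try apply Hb1; auto.
        - replace ((INR k + 1) / INR N * z - INR k / INR N * z) with (z / INR N) by (field; lra).
          unfold Rdiv. rewrite Rabs_mult. rewrite Rabs_inv, (Rabs_right (INR N)) by lra.
          assert (Rabs z <= r) by (apply Rabs_le; lra).
          assert (0 < / INR N) by (apply Rinv_0_lt_compat; lra). unfold Rdiv in Hstep. nra.
        - replace ((INR k + 1) / INR N * w - INR k / INR N * w) with (w / INR N) by (field; lra).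
          unfold Rdiv. rewrite Rabs_mult. rewrite Rabs_inv, (Rabs_right (INR N)) by lra.
          assert (Rabs w <= r) by (apply Rabs_le; lra).
          assert (0 < / INR N) by (apply Rinv_0_lt_compat; lra). unfold Rdiv in Hstep. nra. }
      split_Rabs; lra. }
  specialize (Hk N (Nat.le_refl _)).
  replace (INR N / INR N) with 1 in Hk by (field; lra). rewrite !Rmult_1_l in Hk.
  split_Rabs; lra.
Qed.

Lemma cont2_bounded (f : R -> R -> R) : cont2 f ->
  exists B, 0 <= B /\ forall z w, -1 <= z <= 1 -> -1 <= w <= 1 -> Rabs (f z w) <= B.
Proof. intros H. apply cont2_bounded_r; auto; lra. Qed.

End ModA.
Import ModA.

Module ModB.
Open Scope R_scope.

Lemma hd_interior (s0 s1 : R) f df x : has_deriv_on s0 s1 f df -> s0 < x < s1 ->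
  is_derive f x (df x).
Proof.
  intros H Hx. apply is_derive_Reals. intros eps He.
  destruct (H x ltac:(unfold inI; lra) eps He) as [d [Hd H']].
  assert (Hp : 0 < Rmin d (Rmin (x - s0) (s1 - x))) by (repeat apply Rmin_pos; lra).
  exists (mkposreal _ Hp). intros h Hh0 Hh. simpl in Hh.
  assert (Hh1 := Rle_lt_trans _ _ _ (Rle_refl _) Hh).
  pose proof (Rmin_l d (Rmin (x - s0) (s1 - x))).
  pose proof (Rmin_r d (Rmin (x - s0) (s1 - x))).
  pose proof (Rmin_l (x - s0) (s1 - x)). pose proof (Rmin_r (x - s0) (s1 - x)).
  specialize (H' (x + h)). replace (x + h - x) with h in H' by ring.
  apply H'; unfold inI; split_Rabs; lra.
Qed.

Lemma hd_cont (s0 s1 : R) f df x : has_deriv_on s0 s1 f df -> inI s0 s1 x ->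
  forall eps, 0 < eps -> exists d, 0 < d /\ forall y, inI s0 s1 y -> Rabs (y - x) < d ->
    Rabs (f y - f x) < eps.
Proof.
  intros H Hx eps He.
  destruct (H x Hx 1 ltac:(lra)) as [d [Hd H']].
  set (K := Rabs (df x) + 1).
  assert (HK : 0 < K) by (unfold K; pose proof (Rabs_pos (df x)); lra).
  assert (Hp : 0 < Rmin d (eps / K)) by (apply Rmin_pos; auto; apply Rdiv_lt_0_compat; auto).
  exists (Rmin d (eps / K)); split; auto.
  intros y Hy Hxy. destruct (Req_dec y x) as [->|Hne].
  - rewrite Rminus_diag, Rabs_R0; auto.
  - pose proof (Rmin_l d (eps/K)). pose proof (Rmin_r d (eps/K)).
    specialize (H' y Hy Hne ltac:(lra)).
    assert (Hq : Rabs ((f y - f x) / (y - x)) <= K).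
    { unfold K. pose proof (Rabs_triang_inv ((f y - f x) / (y - x)) (df x)). lra. }
    replace (f y - f x) with ((f y - f x) / (y - x) * (y - x)) by (field; lra).
    rewrite Rabs_mult.
    assert (Rabs (y - x) < eps / K) by lra.
    assert (0 < Rabs (y - x)) by (apply Rabs_pos_lt; lra).
    apply Rle_lt_trans with (K * Rabs (y - x)).
    + apply Rmult_le_compat_r; auto; apply Rabs_pos.
    + apply (Rmult_lt_reg_r (/ K)). apply Rinv_0_lt_compat; auto.
      replace (K * Rabs (y - x) * / K) with (Rabs (y - x)) by (field; lra). auto.
Qed.

Lemma within_clamp_cont (s0 s1 : R) f : s0 <= s1 ->
  (forall x, inI s0 s1 x -> forall eps, 0 < eps -> exists d, 0 < d /\
     forall y, inI s0 s1 y -> Rabs (y - x) < d -> Rabs (f y - f x) < eps) ->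
  cont1 (fun x => f (clamp s0 s1 x)).
Proof.
  intros Hs H x eps He.
  destruct (H (clamp s0 s1 x) (clamp_in _ _ x Hs) eps He) as [d [Hd H']].
  exists d; split; auto. intros y Hy. apply H'.
  - apply clamp_in; auto.
  - eapply Rle_lt_trans; [apply clamp_lip|]; auto.
Qed.

Lemma zero_deriv_const (h : R -> R) (s0 s1 : R) :
  s0 <= s1 -> cont1 (fun x => h (clamp s0 s1 x)) ->
  (forall x, s0 < x < s1 -> is_derive h x 0) ->
  forall s, inI s0 s1 s -> h s = h s0.
Proof.
  intros Hs Hc Hd s Hs'.
  destruct Hs' as [Ha Hb].
  destruct (MVT_gen (fun x => h (clamp s0 s1 x)) s0 s (fun _ => 0)) as [c [_ Hc']].
  - intros x Hx. rewrite Rmin_left, Rmax_right in Hx by lra.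
    apply is_derive_ext_loc with h.
    + assert (Hp : 0 < Rmin (x - s0) (s1 - x)) by (apply Rmin_pos; lra).
      exists (mkposreal _ Hp). intros y Hy. unfold ball in Hy; simpl in Hy.
      unfold AbsRing_ball, abs, minus, plus, opp in Hy; simpl in Hy.
      pose proof (Rmin_l (x - s0) (s1 - x)). pose proof (Rmin_r (x - s0) (s1 - x)).
      rewrite clamp_id; auto. split_Rabs; lra.
    + apply Hd; lra.
  - intros x _. apply cont1_pt; auto.
  - rewrite !clamp_id in Hc' by lra. lra.
Qed.

Section Flow.
Variable a : R -> R.
Variables m M : R.
Hypothesis Ha : cont1 a.
Hypothesis Hm : 0 < m.
Hypothesis Hab : forall x, m <= a x <= M.

Lemma a_pos x : 0 < a x.
Proof. pose proof (Hab x); lra. Qed.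
Lemma mM : m <= M.
Proof. pose proof (Hab 0); lra. Qed.

Definition ia (t : R) := / a t.

Lemma ia_cont1 : cont1 ia.
Proof.
  intros x eps He.
  assert (Hc : continuity_pt (/ a)%F x).
  { apply continuity_pt_inv. apply cont1_pt; auto. pose proof (a_pos x); lra. }
  unfold continuity_pt, continue_in, limit1_in, limit_in in Hc.
  destruct (Hc eps He) as [d [Hd H]]. exists d; split; auto.
  intros y Hy. destruct (Req_dec y x) as [->|Hne].
  - unfold ia. rewrite Rminus_diag, Rabs_R0; auto.
  - apply (H y). split; [split; [exact I|congruence]|]. simpl. unfold R_dist. auto.
Qed.

Lemma ia_ex u v : ex_RInt ia u v.
Proof. apply (@ex_RInt_continuous R_CompleteNormedModule). intros. apply cont1_continuous, ia_cont1. Qed.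

Definition Lam (x : R) : R := RInt ia 0 x.

Lemma Lam0 : Lam 0 = 0.
Proof. unfold Lam. rewrite RInt_point. reflexivity. Qed.

Lemma Lam_diff x y : Lam y - Lam x = RInt ia x y.
Proof.
  unfold Lam. rewrite <- (RInt_Chasles ia 0 x y) by apply ia_ex.
  change (plus ?u ?v) with (u + v). ring.
Qed.

Lemma ia_bounds t : / M <= ia t <= / m.
Proof.
  unfold ia. pose proof (Hab t). pose proof (a_pos t). split; apply Rinv_le_contravar; lra.
Qed.

Lemma Lam_bounds x y : x <= y -> (y - x) / M <= Lam y - Lam x <= (y - x) / m.
Proof.
  intros Hxy. rewrite Lam_diff. pose proof mM.
  split.
  - replace ((y - x) / M) with (RInt (fun _ => / M) x y).
    + apply RInt_le; auto. apply ex_RInt_const. apply ia_ex.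
      intros; apply ia_bounds.
    + rewrite RInt_const. change (scal ?u ?v) with (u * v). unfold Rdiv; reflexivity.
  - replace ((y - x) / m) with (RInt (fun _ => / m) x y).
    + apply RInt_le; auto. apply ia_ex. apply ex_RInt_const.
      intros; apply ia_bounds.
    + rewrite RInt_const. change (scal ?u ?v) with (u * v). unfold Rdiv; reflexivity.
Qed.

Lemma Lam_lip x y : Rabs (Lam y - Lam x) <= Rabs (y - x) / m.
Proof.
  destruct (Rle_dec x y) as [H|H].
  - pose proof (Lam_bounds x y H). assert (0 <= (y - x) / M).
    { apply Rdiv_le_0_compat; pose proof mM; lra. }
    rewrite !Rabs_right; try lra. 
  - pose proof (Lam_bounds y x ltac:(lra)). assert (0 <= (x - y) / M).
    { apply Rdiv_le_0_compat; pose proof mM; lra. }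
    rewrite Rabs_left1 by lra. rewrite Rabs_left1 by lra.
    replace (- (y - x) / m) with ((x - y) / m) by (field; lra). lra.
Qed.

Lemma Lam_cont1 : cont1 Lam.
Proof.
  intros x eps He. exists (eps * m); split; [nra|].
  intros y Hy. eapply Rle_lt_trans; [apply Lam_lip|].
  apply (Rmult_lt_reg_r m); auto. unfold Rdiv. rewrite Rmult_assoc, Rinv_l; lra.
Qed.

Lemma Lam_mono x y : x < y -> Lam x < Lam y.
Proof.
  intros H. pose proof (Lam_bounds x y ltac:(lra)). pose proof mM.
  assert (0 < (y - x) / M) by (apply Rdiv_lt_0_compat; lra). lra.
Qed.

Lemma Lam_inj x y : Lam x = Lam y -> x = y.
Proof.
  intros H. destruct (Rtotal_order x y) as [h|[h|h]]; auto.
  - apply Lam_mono in h; lra.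
  - apply Lam_mono in h; lra.
Qed.

Lemma Lam_le x y : Lam x <= Lam y -> x <= y.
Proof. intros H. destruct (Rle_dec x y); auto. pose proof (Lam_mono y x ltac:(lra)); lra. Qed.

Lemma Lam_derive x : is_derive Lam x (ia x).
Proof.
  apply (is_derive_RInt ia Lam 0 x).
  - apply filter_forall. intros y. unfold Lam. apply (@RInt_correct R_CompleteNormedModule), ia_ex.
  - apply cont1_continuous, ia_cont1.
Qed.

Lemma Lam_surj y : exists x, Lam x = y.
Proof.
  set (X := M * (Rabs y + 1)).
  pose proof mM. pose proof (Rabs_pos y).
  assert (HX : 0 < X) by (unfold X; nra).
  pose proof (Lam_bounds 0 X ltac:(lra)). pose proof (Lam_bounds (-X) 0 ltac:(lra)).
  rewrite Lam0 in *.
  assert (E1 : (X - 0) / M = Rabs y + 1) by (unfold X; field; lra).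
  assert (E2 : (0 - - X) / M = Rabs y + 1) by (unfold X; field; lra).
  destruct (IVT (fun x => Lam x - y) (-X) X) as [x [_ Hx]].
  - intros t. apply continuity_pt_minus. apply cont1_pt, Lam_cont1. apply continuity_pt_const. intros u v; auto.
  - lra.
  - split_Rabs; lra.
  - split_Rabs; lra.
  - exists x; lra.
Qed.

Definition Linv (y : R) : R := epsilon (inhabits 0) (fun x => Lam x = y).

Lemma Lam_Linv y : Lam (Linv y) = y.
Proof. unfold Linv. apply (epsilon_spec (inhabits 0) (fun x => Lam x = y)). apply Lam_surj. Qed.

Lemma Linv_Lam x : Linv (Lam x) = x.
Proof. apply Lam_inj. apply Lam_Linv. Qed.

Lemma Linv_bounds y y' : y <= y' -> m * (y' - y) <= Linv y' - Linv y <= M * (y' - y).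
Proof.
  intros H. set (x := Linv y). set (x' := Linv y').
  assert (Hx : Lam x = y) by apply Lam_Linv. assert (Hx' : Lam x' = y') by apply Lam_Linv.
  assert (Hle : x <= x') by (apply Lam_le; lra).
  pose proof (Lam_bounds x x' Hle). pose proof mM.
  split.
  - apply (Rmult_le_reg_r (/ m)). apply Rinv_0_lt_compat; auto.
    replace (m * (y' - y) * / m) with (y' - y) by (field; lra). unfold Rdiv in *. lra.
  - apply (Rmult_le_reg_r (/ M)). apply Rinv_0_lt_compat; lra.
    replace (M * (y' - y) * / M) with (y' - y) by (field; lra). unfold Rdiv in *. lra.
Qed.

Lemma Linv_lip y y' : Rabs (Linv y' - Linv y) <= M * Rabs (y' - y).
Proof.
  pose proof mM.
  destruct (Rle_dec y y') as [Hy|Hy].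
  - pose proof (Linv_bounds y y' Hy). rewrite !Rabs_right; nra.
  - pose proof (Linv_bounds y' y ltac:(lra)). rewrite !Rabs_left1; nra.
Qed.

Lemma Lam_quot x k : k <> 0 -> / M <= (Lam (x + k) - Lam x) / k.
Proof.
  intros Hk. pose proof mM.
  destruct (Rle_dec 0 k) as [Hkp|Hkn].
  - pose proof (Lam_bounds x (x + k) ltac:(lra)).
    replace (x + k - x) with k in H0 by ring.
    apply (Rmult_le_reg_r k); [lra|].
    replace ((Lam (x + k) - Lam x) / k * k) with (Lam (x + k) - Lam x) by (field; lra).
    replace (/ M * k) with (k / M) by (unfold Rdiv; ring). lra.
  - pose proof (Lam_bounds (x + k) x ltac:(lra)).
    replace (x - (x + k)) with (- k) in H0 by ring.
    apply (Rmult_le_reg_r (- k)); [lra|].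
    replace ((Lam (x + k) - Lam x) / k * - k) with (Lam x - Lam (x + k)) by (field; lra).
    replace (/ M * - k) with (- k / M) by (unfold Rdiv; ring). lra.
Qed.

Lemma Linv_derive y : is_derive Linv y (a (Linv y)).
Proof.
  apply is_derive_Reals. intros eps He.
  set (x := Linv y).
  pose proof (Lam_derive x) as HL. apply is_derive_Reals in HL.
  pose proof mM. pose proof (a_pos x). pose proof (Hab x).
  assert (He' : 0 < eps / (M * M)) by (apply Rdiv_lt_0_compat; nra).
  destruct (HL _ He') as [d Hd].
  assert (Hp : 0 < d / M) by (apply Rdiv_lt_0_compat; destruct d; simpl; lra).
  exists (mkposreal _ Hp). intros h Hh0 Hh. simpl in Hh.
  set (k := Linv (y + h) - x).
  assert (Hk : Rabs k <= M * Rabs h).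
  { unfold k, x. replace h with ((y + h) - y) at 2 by ring. apply Linv_lip. }
  assert (Hk0 : k <> 0).
  { intros Hk0. unfold k in Hk0. assert (Linv (y + h) = Linv y) by (unfold x in Hk0; lra).
    assert (Lam (Linv (y + h)) = Lam (Linv y)) by congruence. rewrite !Lam_Linv in *. lra. }
  assert (Hkd : Rabs k < d).
  { apply Rle_lt_trans with (M * Rabs h); auto.
    apply (Rmult_lt_reg_r (/ M)). apply Rinv_0_lt_compat; lra.
    replace (M * Rabs h * / M) with (Rabs h) by (field; lra). unfold Rdiv in Hh. lra. }
  specialize (Hd k Hk0 Hkd).
  assert (HLk : Lam (x + k) - Lam x = h).
  { unfold k. replace (x + (Linv (y + h) - x)) with (Linv (y + h)) by ring.
    rewrite Lam_Linv. unfold x; rewrite Lam_Linv. ring. }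
  rewrite HLk in Hd.
  replace (Linv (y + h) - Linv y) with k by (unfold k, x; ring).
  set (q := h / k) in *.
  assert (Hq : / M <= q).
  { unfold q. rewrite <- HLk. apply Lam_quot; auto. }
  assert (Hqpos : 0 < q) by (assert (0 < / M) by (apply Rinv_0_lt_compat; lra); lra).
  replace (k / h) with (/ q) by (unfold q; field; split; auto).
  unfold ia in Hd.
  replace (/ q - a x) with (a x * (/ a x - q) / q) by (field; lra).
  unfold Rdiv. rewrite !Rabs_mult. rewrite (Rabs_right (a x)) by lra.
  rewrite (Rabs_right (/ q)) by (left; apply Rinv_0_lt_compat; lra).
  replace (/ a x - q) with (- (q - / a x)) by ring. rewrite Rabs_Ropp.
  assert (Hiq : / q <= M).
  { replace M with (/ / M) by (field; lra). apply Rinv_le_contravar; auto.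
    apply Rinv_0_lt_compat; lra. }
  assert (0 < / q) by (apply Rinv_0_lt_compat; lra).
  assert (Rabs (q - / a x) < eps / (M * M)) by auto.
  pose proof (Rabs_pos (q - / a x)).
  apply Rle_lt_trans with (M * Rabs (q - / a x) * M).
  - apply Rmult_le_compat; [nra | lra | apply Rmult_le_compat_r; lra | lra].
  - replace (M * Rabs (q - / a x) * M) with (Rabs (q - / a x) * (M * M)) by ring.
    apply Rlt_le_trans with (eps / (M * M) * (M * M)).
    + apply Rmult_lt_compat_r; nra.
    + right; field; lra.
Qed.

Definition phi (z s : R) := Linv (Lam z + s).

Lemma phi0 z : phi z 0 = z.
Proof. unfold phi. rewrite Rplus_0_r. apply Linv_Lam. Qed.

Lemma phi_comp z s t : phi (phi z s) t = phi z (s + t).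
Proof. unfold phi. rewrite Lam_Linv. f_equal; ring. Qed.

Lemma Lam_phi z s : Lam (phi z s) = Lam z + s.
Proof. unfold phi. apply Lam_Linv. Qed.

Lemma phi_derive z s : is_derive (phi z) s (a (phi z s)).
Proof.
  unfold phi.
  assert (H := is_derive_comp Linv (fun s => Lam z + s) s _ _ (Linv_derive (Lam z + s))
     (is_derive_plus _ _ s 0 1 (is_derive_const (Lam z) s) (is_derive_id s))).
  simpl in H. change (scal ?u ?v) with (u * v) in H.
  change (plus ?u ?v) with (u + v) in H.
  replace ((0 + 1) * a (Linv (Lam z + s))) with (a (Linv (Lam z + s))) in H by ring.
  exact H.
Qed.

Lemma phi_mono_s z s t : s <= t -> m * (t - s) <= phi z t - phi z s <= M * (t - s).
Proof.
  intros H. unfold phi. pose proof (Linv_bounds (Lam z + s) (Lam z + t) ltac:(lra)).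
  replace (Lam z + t - (Lam z + s)) with (t - s) in H0 by ring. auto.
Qed.

Lemma phi_mono_z z z' s : z <= z' -> phi z s <= phi z' s.
Proof.
  intros H. unfold phi. destruct (Req_dec z z') as [->|Hn]; [lra|].
  pose proof (Lam_mono z z' ltac:(lra)).
  pose proof (Linv_bounds (Lam z + s) (Lam z' + s) ltac:(lra)). nra.
Qed.

Lemma phi_lip z z' s s' : Rabs (phi z' s' - phi z s) <= M * (Rabs (z' - z) / m + Rabs (s' - s)).
Proof.
  unfold phi. eapply Rle_trans; [apply Linv_lip|]. pose proof mM.
  apply Rmult_le_compat_l; [lra|].
  replace (Lam z' + s' - (Lam z + s)) with ((Lam z' - Lam z) + (s' - s)) by ring.
  eapply Rle_trans; [apply Rabs_triang|]. pose proof (Lam_lip z z'). lra.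
Qed.

Lemma curve_flow (c : R -> R) (s0 s1 : R) : s0 <= s1 ->
  has_deriv_on s0 s1 c (fun s => a (c s)) ->
  forall s, inI s0 s1 s -> c s = phi (c s0) (s - s0).
Proof.
  intros Hs Hd.
  assert (Hc : cont1 (fun x => c (clamp s0 s1 x))).
  { apply within_clamp_cont; auto. intros x Hx. apply (hd_cont s0 s1 c _ x Hd Hx). }
  assert (H := zero_deriv_const (fun s => Lam (c s) - s) s0 s1 Hs).
  intros s Hs'. 
  assert (E : Lam (c s) - s = Lam (c s0) - s0).
  { apply H; auto.
    - intros x eps He.
      destruct (Lam_cont1 (c (clamp s0 s1 x)) (eps/2) ltac:(lra)) as [d1 [Hd1 H1]].
      destruct (Hc x d1 Hd1) as [d2 [Hd2 H2]].
      exists (Rmin d2 (eps/2)). split; [apply Rmin_pos; lra|].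
      intros y Hy. pose proof (Rmin_l d2 (eps/2)). pose proof (Rmin_r d2 (eps/2)).
      assert (A1 := H1 _ (H2 y ltac:(lra))).
      pose proof (clamp_lip s0 s1 y x).
      split_Rabs; lra.
    - intros x Hx.
      assert (D := is_derive_minus _ _ x _ _
        (is_derive_comp Lam c x _ _ (Lam_derive (c x)) (hd_interior s0 s1 c _ x Hd Hx))
        (is_derive_id x)).
      simpl in D. change (scal ?u ?v) with (u * v) in D. change (minus ?u ?v) with (u - v) in D.
      unfold ia in D. replace 0 with (a (c x) * / a (c x) - 1).
      + exact D.
      + field. pose proof (a_pos (c x)); lra. }
  apply Lam_inj. rewrite Lam_phi. lra.
Qed.

End Flow.


End ModB.
Import ModB.

Module ModC.
Open Scope R_scope.

Definition inT (z w : R) := 0 <= w <= 1 /\ -w <= z <= w.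
Definition pw (w : R) := clamp 0 1 w.
Definition pz (z w : R) := clamp (- pw w) (pw w) z.

Lemma pw_in w : 0 <= pw w <= 1.
Proof. apply clamp_in; lra. Qed.

Lemma proj_in z w : inT (pz z w) (pw w).
Proof. pose proof (pw_in w). split; auto. apply clamp_in; lra. Qed.

Lemma proj_id z w : inT z w -> pz z w = z /\ pw w = w.
Proof.
  intros [H1 H2]. assert (E : pw w = w) by (apply clamp_id; auto).
  split; auto. unfold pz. rewrite E. apply clamp_id; auto.
Qed.

Lemma clamp_sym_lip p p' z z' : 0 <= p -> 0 <= p' ->
  Rabs (clamp (-p) p z - clamp (-p') p' z') <= Rabs (z - z') + Rabs (p - p').
Proof. intros. unfold clamp, Rmax, Rmin. repeat destruct Rle_dec; split_Rabs; lra. Qed.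

Lemma pw_lip w w' : Rabs (pw w - pw w') <= Rabs (w - w').
Proof. apply clamp_lip. Qed.

Lemma pz_lip z w z' w' : Rabs (pz z w - pz z' w') <= Rabs (z - z') + Rabs (w - w').
Proof.
  unfold pz. pose proof (pw_in w). pose proof (pw_in w').
  eapply Rle_trans; [apply clamp_sym_lip; lra|]. pose proof (pw_lip w w'). lra.
Qed.

Definition cont_T (f : R -> R -> R) := forall z w, inT z w -> forall eps, 0 < eps ->
  exists d, 0 < d /\ forall z' w', inT z' w' -> Rabs (z' - z) < d -> Rabs (w' - w) < d ->
    Rabs (f z' w' - f z w) < eps.

Lemma cont_T_ext f : cont_T f -> cont2 (fun z w => f (pz z w) (pw w)).
Proof.
  intros H z w eps He.
  destruct (H _ _ (proj_in z w) eps He) as [d [Hd H']].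
  exists (d / 2); split; [lra|]. intros z' w' H1 H2.
  apply H'. apply proj_in.
  - pose proof (pz_lip z' w' z w). lra.
  - pose proof (pw_lip w' w). lra.
Qed.

Lemma cont2_cont_T f : cont2 f -> cont_T f.
Proof. intros H z w _ eps He. destruct (H z w eps He) as [d [Hd H']]. exists d; split; auto. Qed.

Definition char_curve_T (a : R -> R) (s0 s1 : R) (zc wc : R -> R) : Prop :=
  s0 <= s1 /\
  has_deriv_on s0 s1 zc (fun s => a (zc s)) /\
  has_deriv_on s0 s1 wc (fun s => a (wc s)) /\
  (forall s, inI s0 s1 s -> inT (zc s) (wc s)).

Definition char_sol_T (a : R -> R) (L F : R -> R -> R) : Prop :=
  forall s0 s1 zc wc, char_curve_T a s0 s1 zc wc ->
    is_RInt (fun s => F (zc s) (wc s)) s0 s1 (L (zc s1) (wc s1) - L (zc s0) (wc s0)).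

Lemma cont2_comp1 (F : R -> R -> R) f h : cont2 F -> cont1 f -> cont1 h -> cont1 (fun s => F (f s) (h s)).
Proof.
  intros HF Hf Hh x eps He.
  destruct (HF (f x) (h x) eps He) as [d [Hd H]].
  destruct (Hf x d Hd) as [d1 [Hd1 H1]]. destruct (Hh x d Hd) as [d2 [Hd2 H2]].
  exists (Rmin d1 d2); split; [apply Rmin_pos; auto|].
  intros y Hy. pose proof (Rmin_l d1 d2). pose proof (Rmin_r d1 d2).
  apply H; [apply H1|apply H2]; lra.
Qed.

Lemma ex_RInt_cont1 f u v : cont1 f -> ex_RInt f u v.
Proof. intros H. apply (@ex_RInt_continuous R_CompleteNormedModule). intros. apply cont1_continuous; auto. Qed.

Lemma RInt_abs_bound f h u v : u <= v -> ex_RInt f u v -> ex_RInt h u v ->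
  (forall x, u < x < v -> Rabs (f x) <= h x) -> Rabs (RInt f u v) <= RInt h u v.
Proof.
  intros Huv Hf Hh H.
  assert (A1 : RInt f u v <= RInt h u v).
  { apply RInt_le; auto. intros x Hx. specialize (H x Hx). split_Rabs; lra. }
  assert (A2 : RInt (fun x => - h x) u v <= RInt f u v).
  { apply RInt_le; auto. apply ex_RInt_opp in Hh. exact Hh.
    intros x Hx. specialize (H x Hx). split_Rabs; lra. }
  assert (E : RInt (fun x => - h x) u v = - RInt h u v) by (apply (RInt_opp h u v); auto).
  rewrite E in A2.
  split_Rabs; lra.
Qed.

Section Core.
Variable a : R -> R.
Variables m M : R.
Hypothesis Ha : cont1 a.
Hypothesis Hm : 0 < m.
Hypothesis Hab : forall x, m <= a x <= M.

Let mM := mM a m M Hab.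
Local Notation phi := (ModB.phi a).
Local Notation Lam := (ModB.Lam a).

Lemma phi_cont1_s z : cont1 (phi z).
Proof.
  intros x eps He. exists (eps / (M + 1)). split.
  - apply Rdiv_lt_0_compat; auto. pose proof mM. lra.
  - intros y Hy. eapply Rle_lt_trans; [apply (phi_lip a m M Ha Hm Hab)|].
    rewrite Rminus_diag, Rabs_R0. unfold Rdiv at 1. rewrite Rmult_0_l, Rplus_0_l.
    pose proof mM. apply Rle_lt_trans with ((M + 1) * Rabs (y - x)).
    + pose proof (Rabs_pos (y - x)). nra.
    + apply (Rmult_lt_reg_r (/ (M + 1))). apply Rinv_0_lt_compat; lra.
      replace ((M + 1) * Rabs (y - x) * / (M + 1)) with (Rabs (y - x)) by (field; lra). auto.
Qed.

Definition gP z w s := phi z s + phi w s.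

Lemma gP_mono z w s t : s <= t -> 2 * m * (t - s) <= gP z w t - gP z w s.
Proof.
  intros H. unfold gP.
  pose proof (phi_mono_s a m M Ha Hm Hab z s t H). pose proof (phi_mono_s a m M Ha Hm Hab w s t H). lra.
Qed.

Lemma phi_at_s0 w : phi w (Lam 0 - Lam w) = 0.
Proof.
  unfold ModB.phi. replace (ModB.Lam a w + (Lam 0 - Lam w)) with (ModB.Lam a 0) by ring.
  apply (Linv_Lam a m M Ha Hm Hab).
Qed.

Lemma hit_exists z w : inT z w -> exists s, Lam 0 - Lam w <= s <= 0 /\ gP z w s = 0.
Proof.
  intros [Hw Hz].
  set (s0 := Lam 0 - Lam w).
  assert (Hs0 : s0 <= 0).
  { unfold s0. pose proof (Lam_bounds a m M Ha Hm Hab 0 w ltac:(lra)).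
    assert (0 <= (w - 0) / M) by (apply Rdiv_le_0_compat; lra). lra. }
  assert (G0 : gP z w 0 = z + w). { unfold gP. rewrite !(phi0 a m M Ha Hm Hab). auto. }
  assert (G1 : gP z w s0 <= 0).
  { unfold gP. unfold s0. rewrite phi_at_s0.
    pose proof (phi_mono_z a m M Ha Hm Hab z w (Lam 0 - Lam w) ltac:(lra)).
    rewrite phi_at_s0 in H. lra. }
  destruct (Req_dec (gP z w s0) 0) as [E|N1].
  { exists s0; split; [lra|auto]. }
  destruct (Req_dec (z + w) 0) as [E|N2].
  { exists 0; split; [lra|lra]. }
  assert (Hlt : s0 < 0).
  { destruct (Req_dec s0 0) as [E|]; [|lra]. rewrite E in N1, G1. lra. }
  destruct (IVT (gP z w) s0 0) as [x [Hx Hx']].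
  - intros t. apply cont1_pt. unfold gP.
    intros x eps He. destruct (phi_cont1_s z x (eps/2) ltac:(lra)) as [d1 [Hd1 H1]].
    destruct (phi_cont1_s w x (eps/2) ltac:(lra)) as [d2 [Hd2 H2]].
    exists (Rmin d1 d2); split; [apply Rmin_pos; auto|].
    intros y Hy. pose proof (Rmin_l d1 d2). pose proof (Rmin_r d1 d2).
    specialize (H1 y ltac:(lra)). specialize (H2 y ltac:(lra)). split_Rabs; lra.
  - auto.
  - lra.
  - lra.
  - exists x; split; [lra|auto].
Qed.

Definition sig0 (z w : R) : R :=
  epsilon (inhabits 0) (fun s => Lam 0 - Lam w <= s <= 0 /\ gP z w s = 0).

Lemma sig0_spec z w : inT z w -> Lam 0 - Lam w <= sig0 z w <= 0 /\ gP z w (sig0 z w) = 0.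
Proof.
  intros H. unfold sig0. apply (epsilon_spec (inhabits 0) (fun s => Lam 0 - Lam w <= s <= 0 /\ gP z w s = 0)).
  apply hit_exists; auto.
Qed.

Lemma sig0_unique z w s : inT z w -> gP z w s = 0 -> s = sig0 z w.
Proof.
  intros H Hs. destruct (sig0_spec z w H) as [_ E].
  destruct (Rtotal_order s (sig0 z w)) as [h|[h|h]]; auto.
  - pose proof (gP_mono z w s (sig0 z w) ltac:(lra)). nra.
  - pose proof (gP_mono z w (sig0 z w) s ltac:(lra)). nra.
Qed.

Lemma sig0_lip z w z' w' : inT z w -> inT z' w' ->
  Rabs (sig0 z' w' - sig0 z w) <= M / (2 * m * m) * (Rabs (z' - z) + Rabs (w' - w)).
Proof.
  intros H H'. destruct (sig0_spec z w H) as [_ E]. destruct (sig0_spec z' w' H') as [_ E'].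
  set (s := sig0 z w) in *. set (s' := sig0 z' w') in *.
  assert (Hd : Rabs (gP z w s') <= M / m * (Rabs (z' - z) + Rabs (w' - w))).
  { replace (gP z w s') with ((phi z s' - phi z' s') + (phi w s' - phi w' s')) by (unfold gP in *; lra).
    pose proof (phi_lip a m M Ha Hm Hab z' z s' s'). pose proof (phi_lip a m M Ha Hm Hab w' w s' s').
    rewrite Rminus_diag, Rabs_R0, Rplus_0_r in H0, H1. 
    replace (M / m * (Rabs (z' - z) + Rabs (w' - w))) with (M * (Rabs (z - z') / m) + M * (Rabs (w - w') / m)).
    - eapply Rle_trans; [apply Rabs_triang|]. apply Rplus_le_compat; auto.
    - rewrite (Rabs_minus_sym z z'), (Rabs_minus_sym w w'). field; lra. }
  assert (Hm2 : Rabs (gP z w s') >= 2 * m * Rabs (s' - s)).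
  { destruct (Rle_dec s s') as [h|h].
    - pose proof (gP_mono z w s s' h). rewrite E in H0. rewrite !Rabs_right; nra.
    - pose proof (gP_mono z w s' s ltac:(lra)). rewrite E in H0. rewrite Rabs_left1 by nra.
      rewrite Rabs_left1 by lra. nra. }
  apply (Rmult_le_reg_l (2 * m)); [lra|].
  replace (2 * m * (M / (2 * m * m) * (Rabs (z' - z) + Rabs (w' - w)))) with
     (M / m * (Rabs (z' - z) + Rabs (w' - w))) by (field; lra).
  lra.
Qed.

Lemma curve_in_T z w s : inT z w -> sig0 z w <= s <= 0 -> inT (phi z s) (phi w s).
Proof.
  intros H Hs. destruct (sig0_spec z w H) as [[Hs0 _] E].
  destruct H as [Hw Hz].
  assert (A1 : 0 <= phi w s).
  { pose proof (phi_mono_s a m M Ha Hm Hab w (Lam 0 - Lam w) s ltac:(lra)) as P.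
    rewrite phi_at_s0 in P. pose proof mM. nra. }
  assert (A2 : phi w s <= w).
  { pose proof (phi_mono_s a m M Ha Hm Hab w s 0 ltac:(lra)). rewrite (phi0 a m M Ha Hm Hab) in H. pose proof mM. nra. }
  assert (A3 : phi z s <= phi w s) by (apply (phi_mono_z a m M Ha Hm Hab); lra).
  assert (A4 : 0 <= gP z w s) by (pose proof (gP_mono z w (sig0 z w) s ltac:(lra)); nra).
  unfold gP in A4. split; lra.
Qed.

Lemma sig0_anti w : 0 <= w <= 1 -> sig0 (- w) w = 0.
Proof.
  intros H. symmetry. apply sig0_unique.
  - split; lra.
  - unfold gP. rewrite !(phi0 a m M Ha Hm Hab). ring.
Qed.

Lemma sig0_shift z w t : inT z w -> inT (phi z t) (phi w t) ->
  sig0 (phi z t) (phi w t) = sig0 z w - t.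
Proof.
  intros H H'. symmetry. apply sig0_unique; auto.
  unfold gP. rewrite !(phi_comp a m M Ha Hm Hab).
  replace (t + (sig0 z w - t)) with (sig0 z w) by ring.
  destruct (sig0_spec z w H) as [_ E]. exact E.
Qed.

Lemma sig0_bound z w : inT z w -> - (1 / m) <= sig0 z w <= 0.
Proof.
  intros H. destruct (sig0_spec z w H) as [[H1 H2] _]. split; auto.
  destruct H as [Hw _]. pose proof (Lam_bounds a m M Ha Hm Hab 0 w ltac:(lra)).
  assert ((w - 0) / m <= 1 / m) by (unfold Rdiv; apply Rmult_le_compat_r; [left; apply Rinv_0_lt_compat; lra|lra]).
  lra.
Qed.

End Core.

End ModC.
Import ModC.

Module ModD.
Open Scope R_scope.

Lemma RInt_bound_const f x y Bd : ex_RInt f x y ->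
  (forall t, Rmin x y <= t <= Rmax x y -> Rabs (f t) <= Bd) -> Rabs (RInt f x y) <= Bd * Rabs (y - x).
Proof.
  intros Hf H.
  destruct (Rle_dec x y) as [h|h].
  - rewrite Rmin_left, Rmax_right in H by lra.
    eapply Rle_trans; [apply (RInt_abs_bound f (fun _ => Bd)); auto|].
    + apply ex_RInt_const.
    + intros; apply H; lra.
    + rewrite RInt_const. change (scal ?u ?v) with (u * v). rewrite Rabs_right by lra. right; ring.
  - rewrite Rmin_right, Rmax_left in H by lra.
    apply ex_RInt_swap in Hf.
    rewrite <- opp_RInt_swap by auto. change (opp ?u) with (- u). rewrite Rabs_Ropp.
    eapply Rle_trans; [apply (RInt_abs_bound f (fun _ => Bd)); auto|].
    + lra.
    + apply ex_RInt_const.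
    + intros; apply H; lra.
    + rewrite RInt_const. change (scal ?u ?v) with (u * v). rewrite Rabs_left by lra. right; ring.
Qed.

Section Core2.
Variable a : R -> R.
Variables m M : R.
Hypothesis Ha : cont1 a.
Hypothesis Hm : 0 < m.
Hypothesis Hab : forall x, m <= a x <= M.
Local Notation phi := (ModB.phi a).
Local Notation Lam := (ModB.Lam a).
Local Notation sig := (sig0 a).
Let mM : m <= M := mM a m M Hab.

Variable G : (bool -> R -> R -> R) -> bool -> R -> R -> R.
Variable g : bool -> R -> R.
Hypothesis HG1 : forall u, (forall i, cont2 (u i)) -> forall i, cont2 (G u i).
Hypothesis Hg : forall i, cont1 (g i).

Definition Tc u i z w := g i (phi w (sig z w)) + RInt (fun s => G u i (phi z s) (phi w s)) (sig z w) 0.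
Definition Te u i z w := Tc u i (pz z w) (pw w).

Lemma curve_cont (F : R -> R -> R) z w : cont2 F -> cont1 (fun s => F (phi z s) (phi w s)).
Proof. intros H. apply cont2_comp1; auto; apply (phi_cont1_s a m M Ha Hm Hab). Qed.

Lemma Tc_cont u : (forall i, cont2 (u i)) -> forall i, cont_T (Tc u i).
Proof.
  intros Hu i z w HP eps He.
  set (F := G u i). assert (HF : cont2 F) by (apply HG1; auto).
  destruct (cont2_bounded_r F 2 ltac:(lra) HF) as [Bd [HBd HB]].
  set (eta := eps * m / 6).
  assert (Heta : 0 < eta) by (unfold eta; nra).
  destruct (cont2_unif F (-2) 2 HF eta Heta) as [d1 [Hd1 HU]].
  set (x0 := phi w (sig z w)).
  destruct (Hg i x0 (eps/3) ltac:(lra)) as [dg [Hdg HG]].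
  set (Ks := M / (2*m*m)).
  assert (HKs : 0 < Ks) by (unfold Ks; apply Rdiv_lt_0_compat; nra).
  set (Kw := M * (1/m + 2 * Ks)).
  assert (HKw : 0 < Kw) by (unfold Kw; assert (0 < 1/m) by (apply Rdiv_lt_0_compat; lra); nra).
  set (e4 := eps / (6 * (Bd + 1) * (Ks + 1))).
  assert (He4 : 0 < e4) by (unfold e4; apply Rdiv_lt_0_compat; nra).
  set (dd := Rmin (Rmin (m / M) (d1 * m / (2 * M))) (Rmin (dg / (2 * Kw)) e4)).
  assert (Hdd : 0 < dd).
  { unfold dd. repeat apply Rmin_pos; auto; apply Rdiv_lt_0_compat; nra. }
  exists dd; split; auto.
  intros z' w' HQ H1 H2.
  assert (D1 : dd <= m / M) by (unfold dd; pose proof (Rmin_l (Rmin (m / M) (d1 * m / (2 * M))) (Rmin (dg / (2 * Kw)) e4)); pose proof (Rmin_l (m / M) (d1 * m / (2 * M))); lra).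
  assert (D2 : dd <= d1 * m / (2 * M)) by (unfold dd; pose proof (Rmin_l (Rmin (m / M) (d1 * m / (2 * M))) (Rmin (dg / (2 * Kw)) e4)); pose proof (Rmin_r (m / M) (d1 * m / (2 * M))); lra).
  assert (D3 : dd <= dg / (2 * Kw)) by (unfold dd; pose proof (Rmin_r (Rmin (m / M) (d1 * m / (2 * M))) (Rmin (dg / (2 * Kw)) e4)); pose proof (Rmin_l (dg / (2 * Kw)) e4); lra).
  assert (D4 : dd <= e4) by (unfold dd; pose proof (Rmin_r (Rmin (m / M) (d1 * m / (2 * M))) (Rmin (dg / (2 * Kw)) e4)); pose proof (Rmin_r (dg / (2 * Kw)) e4); lra).
  set (s := sig z w). set (s' := sig z' w').
  assert (Hs : Rabs (s' - s) <= Ks * (2 * dd)).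
  { pose proof (sig0_lip a m M Ha Hm Hab z w z' w' HP HQ). fold Ks in H. fold s s' in H.
    eapply Rle_trans; [exact H|]. apply Rmult_le_compat_l; lra. }
  assert (Bs := sig0_bound a m M Ha Hm Hab z w HP). fold s in Bs.
  assert (Bs' := sig0_bound a m M Ha Hm Hab z' w' HQ). fold s' in Bs'.
  assert (T1 : Rabs (g i (phi w' s') - g i x0) < eps / 3).
  { apply HG. unfold x0. fold s.
    eapply Rle_lt_trans; [apply (phi_lip a m M Ha Hm Hab)|].
    apply Rle_lt_trans with (Kw * dd).
    - unfold Kw. apply Rle_trans with (M * (dd / m + Ks * (2 * dd))).
      + apply Rmult_le_compat_l; [lra|]. apply Rplus_le_compat; auto.
        unfold Rdiv. apply Rmult_le_compat_r; [left; apply Rinv_0_lt_compat; lra|lra].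
      + right; field; lra.
    - apply Rle_lt_trans with (dg / 2).
      + replace (dg / 2) with (Kw * (dg / (2 * Kw))) by (field; lra). apply Rmult_le_compat_l; lra.
      + lra. }
  assert (Near : forall t, s' <= t <= 0 ->
     Rabs (phi z t - phi z' t) <= d1 / 2 /\ Rabs (phi w t - phi w' t) <= d1 / 2).
  { intros t Ht. 
    assert (Hgen : forall x x', Rabs (x - x') < dd -> Rabs (phi x t - phi x' t) <= d1 / 2).
    { intros x x' Hx. eapply Rle_trans; [apply (phi_lip a m M Ha Hm Hab)|].
      rewrite Rminus_diag, Rabs_R0, Rplus_0_r.
      apply Rle_trans with (M * (dd / m)).
      - apply Rmult_le_compat_l; [lra|]. unfold Rdiv. apply Rmult_le_compat_r; [left; apply Rinv_0_lt_compat; lra|lra].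
      - apply Rle_trans with (M * ((d1 * m / (2 * M)) / m)).
        + apply Rmult_le_compat_l; [lra|]. unfold Rdiv. apply Rmult_le_compat_r; [left; apply Rinv_0_lt_compat; lra|]. unfold Rdiv in D2. lra.
        + right. field. lra. }
    split; apply Hgen; rewrite Rabs_minus_sym; auto. }
  assert (Near1 : forall t, s' <= t <= 0 -> Rabs (phi z t - phi z' t) <= 1 /\ Rabs (phi w t - phi w' t) <= 1).
  { intros t Ht. 
    assert (Hgen : forall x x', Rabs (x - x') < dd -> Rabs (phi x t - phi x' t) <= 1).
    { intros x x' Hx. eapply Rle_trans; [apply (phi_lip a m M Ha Hm Hab)|].
      rewrite Rminus_diag, Rabs_R0, Rplus_0_r.
      apply Rle_trans with (M * (dd / m)).
      - apply Rmult_le_compat_l; [lra|]. unfold Rdiv. apply Rmult_le_compat_r; [left; apply Rinv_0_lt_compat; lra|lra].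
      - apply Rle_trans with (M * ((m / M) / m)).
        + apply Rmult_le_compat_l; [lra|]. unfold Rdiv. apply Rmult_le_compat_r; [left; apply Rinv_0_lt_compat; lra|]. unfold Rdiv in D1. lra.
        + right. field. lra. }
    split; apply Hgen; rewrite Rabs_minus_sym; auto. }
  assert (Box : forall t, Rmin s s' <= t <= 0 -> -2 <= phi z t <= 2 /\ -2 <= phi w t <= 2).
  { intros t Ht. destruct (Rle_dec s t) as [h|h].
    - destruct (curve_in_T a m M Ha Hm Hab z w t HP ltac:(fold s; lra)) as [[A1 A2] [A3 A4]]. lra.
    - assert (s' <= t).
      { destruct (Rle_dec s s'); [rewrite Rmin_left in Ht by lra; lra | rewrite Rmin_right in Ht by lra; lra]. }
      destruct (curve_in_T a m M Ha Hm Hab z' w' t HQ ltac:(fold s'; lra)) as [[A1 A2] [A3 A4]].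
      destruct (Near1 t ltac:(lra)) as [N1 N2]. split_Rabs; lra. }
  assert (BoxQ : forall t, s' <= t <= 0 -> -2 <= phi z' t <= 2 /\ -2 <= phi w' t <= 2).
  { intros t Ht. destruct (curve_in_T a m M Ha Hm Hab z' w' t HQ ltac:(fold s'; lra)) as [[A1 A2] [A3 A4]]. lra. }
  assert (ExP : forall x y, ex_RInt (fun t => F (phi z t) (phi w t)) x y) by (intros; apply ex_RInt_cont1, curve_cont; auto).
  assert (ExQ : forall x y, ex_RInt (fun t => F (phi z' t) (phi w' t)) x y) by (intros; apply ex_RInt_cont1, curve_cont; auto).
  assert (T2 : Rabs (RInt (fun t => F (phi z t) (phi w t)) s' s) <= eps / 3).
  { eapply Rle_trans; [apply RInt_bound_const; auto|].
    - intros t Ht. apply HB; apply Box; split.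
      + pose proof (Rmin_l s s'); pose proof (Rmin_r s s'). pose proof (Rmin_r s' s). pose proof (Rmin_l s' s).
        rewrite Rmin_comm in Ht. lra.
      + pose proof (Rmax_lub s' s 0 ltac:(lra) ltac:(lra)). lra.
      + pose proof (Rmin_l s s'); pose proof (Rmin_r s s'). rewrite Rmin_comm in Ht. lra.
      + pose proof (Rmax_lub s' s 0 ltac:(lra) ltac:(lra)). lra.
    - rewrite Rabs_minus_sym.
      apply Rle_trans with (Bd * (Ks * (2 * e4))).
      + apply Rmult_le_compat_l; auto. eapply Rle_trans; [exact Hs|]. apply Rmult_le_compat_l; lra.
      + unfold e4. apply Rle_trans with ((Bd + 1) * ((Ks + 1) * (2 * (eps / (6 * (Bd + 1) * (Ks + 1)))))).
        * apply Rmult_le_compat; try lra.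
          -- apply Rmult_le_pos; [lra|]. assert (0 < eps / (6 * (Bd + 1) * (Ks + 1))) by (apply Rdiv_lt_0_compat; nra). lra.
          -- apply Rmult_le_compat_r; [|lra]. assert (0 < eps / (6 * (Bd + 1) * (Ks + 1))) by (apply Rdiv_lt_0_compat; nra). lra.
        * right. field. lra. }
  assert (T3 : Rabs (RInt (fun t => F (phi z' t) (phi w' t) - F (phi z t) (phi w t)) s' 0) <= eps / 6).
  { eapply Rle_trans; [apply (RInt_abs_bound _ (fun _ => eta)); try lra|].
    - apply (ex_RInt_minus (V := R_NormedModule)); auto.
    - apply ex_RInt_const.
    - intros t Ht. left. destruct (BoxQ t ltac:(lra)) as [Q1 Q2].
      destruct (Near t ltac:(lra)) as [N1 N2].
      destruct (Box t ltac:(pose proof (Rmin_r s s'); lra)) as [B1 B2].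
      apply HU; auto; try (split_Rabs; lra).
    - rewrite (RInt_const (V := R_CompleteNormedModule)). change (scal ?u ?v) with (u * v).
      apply Rle_trans with ((1 / m) * eta).
      + apply Rmult_le_compat_r; lra.
      + unfold eta. right. field. lra. }
  assert (Hsplit : RInt (fun t => F (phi z' t) (phi w' t)) s' 0 - RInt (fun t => F (phi z t) (phi w t)) s 0 =
     RInt (fun t => F (phi z' t) (phi w' t) - F (phi z t) (phi w t)) s' 0 + RInt (fun t => F (phi z t) (phi w t)) s' s).
  { assert (E1 : RInt (fun t => F (phi z' t) (phi w' t) - F (phi z t) (phi w t)) s' 0 =
       RInt (fun t => F (phi z' t) (phi w' t)) s' 0 - RInt (fun t => F (phi z t) (phi w t)) s' 0)
      by (apply (RInt_minus (V := R_CompleteNormedModule)); auto).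
    assert (E2 : RInt (fun t => F (phi z t) (phi w t)) s' s + RInt (fun t => F (phi z t) (phi w t)) s 0 =
       RInt (fun t => F (phi z t) (phi w t)) s' 0)
      by (apply (RInt_Chasles (V := R_CompleteNormedModule)); auto).
    rewrite E1. lra. }
  unfold Tc. fold s s' F. change (phi w s) with x0.
  replace (g i (phi w' s') + RInt (fun t => F (phi z' t) (phi w' t)) s' 0 - (g i x0 + RInt (fun t => F (phi z t) (phi w t)) s 0))
    with ((g i (phi w' s') - g i x0) + (RInt (fun t => F (phi z' t) (phi w' t)) s' 0 - RInt (fun t => F (phi z t) (phi w t)) s 0)) by ring.
  rewrite Hsplit.
  eapply Rle_lt_trans; [apply Rabs_triang|].
  eapply Rle_lt_trans; [apply Rplus_le_compat_r; left; apply T1|].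
  eapply Rle_lt_trans; [apply Rplus_le_compat_l; apply Rabs_triang|]. lra.
Qed.

End Core2.

End ModD.
Import ModD.

Module ModE.
Open Scope R_scope.

Lemma geom_limit (f : nat -> R) A : 0 <= A -> (forall n, Rabs (f (S n) - f n) <= A / 2 ^ n) ->
  forall n, Rabs (Lim_seq f - f n) <= 2 * A / 2 ^ n.
Proof.
  intros HA H.
  assert (Hp : forall n, 0 < 2 ^ n) by (intros; apply pow_lt; lra).
  assert (Hc : forall n j, Rabs (f (n + j)%nat - f n) <= 2 * A / 2 ^ n * (1 - / 2 ^ j)).
  { intros n j. induction j.
    - rewrite Nat.add_0_r, Rminus_diag, Rabs_R0. simpl. rewrite Rinv_1. lra.
    - replace (n + S j)%nat with (S (n + j)) by lia.
      eapply Rle_trans; [|right].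
      + replace (f (S (n + j)) - f n) with ((f (S (n + j)) - f (n + j)%nat) + (f (n + j)%nat - f n)) by ring.
        eapply Rle_trans; [apply Rabs_triang|]. apply Rplus_le_compat; [apply H|apply IHj].
      + rewrite pow_add. simpl. field. split; apply pow_nonzero; lra. }
  assert (Hc' : forall n k, (n <= k)%nat -> Rabs (f k - f n) <= 2 * A / 2 ^ n).
  { intros n k Hk. replace k with (n + (k - n))%nat by lia. eapply Rle_trans; [apply Hc|].
    assert (0 < / 2 ^ (k - n)) by (apply Rinv_0_lt_compat; auto).
    assert (0 <= 2 * A / 2 ^ n) by (apply Rdiv_le_0_compat; auto; lra). nra. }
  assert (Hex : ex_finite_lim_seq f).
  { apply ex_lim_seq_cauchy_corr. intros eps.
    assert (Hlim : is_lim_seq (fun n => 2 * A / 2 ^ n) 0).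
    { replace 0 with (2 * A * 0) by ring.
      apply (is_lim_seq_ext (fun n => 2 * A * (/ 2) ^ n)).
      - intros n. rewrite <- Rinv_pow by lra. unfold Rdiv. reflexivity.
      - apply (is_lim_seq_scal_l _ (2 * A) 0). apply is_lim_seq_geom. rewrite Rabs_pos_eq; lra. }
    apply is_lim_seq_spec in Hlim. destruct (Hlim (pos_div_2 eps)) as [N HN].
    exists N. intros n k Hn Hk.
    specialize (HN N (le_n N)). rewrite Rminus_0_r in HN. simpl in HN.
    assert (A1 := Hc' N n Hn). assert (A2 := Hc' N k Hk).
    rewrite Rabs_pos_eq in HN by (apply Rdiv_le_0_compat; auto; lra).
    split_Rabs; lra. }
  destruct Hex as [l Hl].
  rewrite (is_lim_seq_unique f l Hl). simpl.
  intros n. apply Rnot_lt_le. intros Hlt.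
  set (e := Rabs (l - f n) - 2 * A / 2 ^ n).
  assert (He : 0 < e) by (unfold e; lra).
  apply is_lim_seq_spec in Hl. destruct (Hl (mkposreal e He)) as [N HN]. simpl in HN.
  specialize (HN (max N n) (Nat.le_max_l _ _)). specialize (Hc' n (max N n) (Nat.le_max_r _ _)).
  unfold e in HN. split_Rabs; lra.
Qed.

Lemma unif_lim_cont2 (u : nat -> R -> R -> R) (U : R -> R -> R) (e : nat -> R) :
  (forall n, cont2 (u n)) -> (forall n z w, Rabs (U z w - u n z w) <= e n) ->
  (forall eps, 0 < eps -> exists n, e n < eps) -> cont2 U.
Proof.
  intros Hu HU He z w eps Heps.
  destruct (He (eps / 3) ltac:(lra)) as [n Hn].
  destruct (Hu n z w (eps / 3) ltac:(lra)) as [d [Hd H]].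
  exists d; split; auto. intros z' w' H1 H2.
  specialize (H z' w' H1 H2). pose proof (HU n z w). pose proof (HU n z' w').
  split_Rabs; lra.
Qed.

Section Core3.
Variable a : R -> R.
Variables m M : R.
Hypothesis Ha : cont1 a.
Hypothesis Hm : 0 < m.
Hypothesis Hab : forall x, m <= a x <= M.
Local Notation phi := (ModB.phi a).
Local Notation Lam := (ModB.Lam a).
Local Notation sig := (sig0 a).
Let mM : m <= M := mM a m M Hab.

Variable G : (bool -> R -> R -> R) -> bool -> R -> R -> R.
Variable g : bool -> R -> R.
Hypothesis HG1 : forall u, (forall i, cont2 (u i)) -> forall i, cont2 (G u i).
Hypothesis Hg : forall i, cont1 (g i).
Variable C : R.
Hypothesis HC : 0 <= C.
Hypothesis HG2 : forall u v (rho : R -> R),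
  (forall i z w, inT z w -> Rabs (u i z w - v i z w) <= rho w) ->
  forall i z w, inT z w -> Rabs (G u i z w - G v i z w) <= C * rho w.

Local Notation Tc := (Tc a G g).
Local Notation Te := (Te a G g).

Lemma Te_cont2 u : (forall i, cont2 (u i)) -> forall i, cont2 (Te u i).
Proof. intros H i. apply cont_T_ext. apply (Tc_cont a m M Ha Hm Hab G g HG1 Hg); auto. Qed.

Lemma Te_T u i z w : inT z w -> Te u i z w = Tc u i z w.
Proof. intros H. unfold ModD.Te. destruct (proj_id z w H) as [-> ->]. auto. Qed.

Definition Kc := 2 * C + 1.
Definition ew w := exp (Kc * (Lam w - Lam 0)).

Lemma ew_ge1 w : 0 <= w -> 1 <= ew w.
Proof.
  intros H. unfold ew. pose proof (Lam_bounds a m M Ha Hm Hab 0 w H).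
  assert (0 <= (w - 0) / M) by (apply Rdiv_le_0_compat; lra).
  destruct (Req_dec (Kc * (Lam w - Lam 0)) 0) as [E|E].
  - rewrite E, exp_0; lra.
  - left. rewrite <- exp_0. apply exp_increasing. unfold Kc in *. nra.
Qed.

Lemma ew_le w : 0 <= w <= 1 -> ew w <= ew 1.
Proof.
  intros H. unfold ew. destruct (Req_dec w 1) as [->|E]; [lra|].
  left. apply exp_increasing. pose proof (Lam_mono a m M Ha Hm Hab w 1 ltac:(lra)).
  unfold Kc. nra.
Qed.

Lemma contr u v Bn : 0 <= Bn ->
  (forall i z w, inT z w -> ex_RInt (fun s => G u i (phi z s) (phi w s)) (sig z w) 0) ->
  (forall i z w, inT z w -> ex_RInt (fun s => G v i (phi z s) (phi w s)) (sig z w) 0) ->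
  (forall i z w, inT z w -> Rabs (u i z w - v i z w) <= Bn * ew w) ->
  forall i z w, inT z w -> Rabs (Tc u i z w - Tc v i z w) <= Bn / 2 * ew w.
Proof.
  intros HB Eu Ev H i z w HP.
  set (s := sig z w).
  assert (Hs := sig0_spec a m M Ha Hm Hab z w HP). fold s in Hs. destruct Hs as [[Hs1 Hs2] _].
  set (c := Lam w - Lam 0).
  set (h := fun t => C * Bn * exp (Kc * (c + t))).
  assert (HK : 0 < Kc) by (unfold Kc; lra).
  assert (Hh : is_RInt h s 0 (C * Bn * exp (Kc * (c + 0)) / Kc - C * Bn * exp (Kc * (c + s)) / Kc)).
  { apply (is_RInt_derive (fun t => C * Bn * exp (Kc * (c + t)) / Kc) h).
    - intros x _. unfold h. auto_derive; auto. field. lra.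
    - intros x _. unfold h. apply continuity_pt_filterlim. apply derivable_continuous_pt.
      apply derivable_pt_mult. apply derivable_pt_const.
      apply (derivable_pt_comp (fun t => Kc * (c + t)) exp). 
      + apply derivable_pt_mult; [apply derivable_pt_const|]. apply derivable_pt_plus; [apply derivable_pt_const|apply derivable_pt_id].
      + apply derivable_pt_exp. }
  unfold ModD.Tc. fold s.
  replace (g i (phi w s) + RInt (fun s0 => G u i (phi z s0) (phi w s0)) s 0 -
     (g i (phi w s) + RInt (fun s0 => G v i (phi z s0) (phi w s0)) s 0)) with
     (RInt (fun s0 => G u i (phi z s0) (phi w s0) - G v i (phi z s0) (phi w s0)) s 0).
  2: { assert (E : RInt (fun s0 => G u i (phi z s0) (phi w s0) - G v i (phi z s0) (phi w s0)) s 0 =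
        RInt (fun s0 => G u i (phi z s0) (phi w s0)) s 0 - RInt (fun s0 => G v i (phi z s0) (phi w s0)) s 0)
       by (apply (RInt_minus (V := R_CompleteNormedModule)); auto). rewrite E. lra. }
  eapply Rle_trans; [apply (RInt_abs_bound _ h); auto|].
  - apply (ex_RInt_minus (V := R_NormedModule)); auto.
  - exists (C * Bn * exp (Kc * (c + 0)) / Kc - C * Bn * exp (Kc * (c + s)) / Kc); auto.
  - intros t Ht.
    assert (HT := curve_in_T a m M Ha Hm Hab z w t HP ltac:(fold s; lra)).
    eapply Rle_trans; [apply (HG2 u v (fun w => Bn * ew w)); auto|].
    unfold h, ew. rewrite (Lam_phi a m M Ha Hm Hab). right. unfold c.
    replace (Lam w + t - Lam 0) with (Lam w - Lam 0 + t) by ring. ring.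
  - rewrite (is_RInt_unique h s 0 _ Hh).
    unfold ew. fold c. rewrite Rplus_0_r.
    assert (0 < exp (Kc * (c + s))) by apply exp_pos.
    assert (0 < exp (Kc * c)) by apply exp_pos.
    apply Rle_trans with (C * Bn * exp (Kc * c) / Kc).
    + assert (0 <= C * Bn * exp (Kc * (c + s)) / Kc).
      { apply Rdiv_le_0_compat; [|lra]. apply Rmult_le_pos; [nra|lra]. }
      lra.
    + apply (Rmult_le_reg_r Kc); auto.
      replace (C * Bn * exp (Kc * c) / Kc * Kc) with (C * Bn * exp (Kc * c)) by (field; lra).
      replace (Bn / 2 * exp (Kc * c) * Kc) with ((C + / 2) * Bn * exp (Kc * c)) by (unfold Kc; field).
      assert (0 <= Bn * exp (Kc * c)) by nra. nra.
Qed.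

End Core3.

End ModE.
Import ModE.

Module ModF.
Open Scope R_scope.

Lemma pow2_small A eps : 0 < eps -> exists n, A / 2 ^ n < eps.
Proof.
  intros He.
  assert (Hlim : is_lim_seq (fun n => A / 2 ^ n) 0).
  { replace 0 with (A * 0) by ring.
    apply (is_lim_seq_ext (fun n => A * (/ 2) ^ n)).
    - intros n. rewrite <- Rinv_pow by lra. unfold Rdiv. reflexivity.
    - apply (is_lim_seq_scal_l _ A 0). apply is_lim_seq_geom. rewrite Rabs_pos_eq; lra. }
  apply is_lim_seq_spec in Hlim. destruct (Hlim (mkposreal eps He)) as [N HN].
  exists N. specialize (HN N (le_n N)). simpl in HN. rewrite Rminus_0_r in HN.
  split_Rabs; lra.
Qed.

Lemma zero_of_pow2 x c : (forall n, Rabs x <= c / 2 ^ n) -> x = 0.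
Proof.
  intros H. destruct (Req_dec x 0) as [E|E]; auto.
  assert (Hp : 0 < Rabs x) by (apply Rabs_pos_lt; auto).
  destruct (pow2_small c (Rabs x) Hp) as [n Hn]. specialize (H n). lra.
Qed.

Lemma is_derive_hd f df s0 s1 : (forall x, is_derive f x (df x)) -> has_deriv_on s0 s1 f df.
Proof.
  intros H x _ eps He. specialize (H x). apply is_derive_Reals in H.
  destruct (H eps He) as [d Hd]. exists d; split; [destruct d; auto|].
  intros y _ Hne Hy. specialize (Hd (y - x) ltac:(lra) Hy).
  replace (x + (y - x)) with y in Hd by ring. exact Hd.
Qed.

Section Core4.
Variable a : R -> R.
Variables m M : R.
Hypothesis Ha : cont1 a.
Hypothesis Hm : 0 < m.
Hypothesis Hab : forall x, m <= a x <= M.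
Local Notation phi := (ModB.phi a).
Local Notation Lam := (ModB.Lam a).
Local Notation sig := (sig0 a).
Let mM : m <= M := mM a m M Hab.

Variable G : (bool -> R -> R -> R) -> bool -> R -> R -> R.
Variable g : bool -> R -> R.
Hypothesis HG1 : forall u, (forall i, cont2 (u i)) -> forall i, cont2 (G u i).
Hypothesis Hg : forall i, cont1 (g i).
Variable C : R.
Hypothesis HC : 0 <= C.
Hypothesis HG2 : forall u v (rho : R -> R),
  (forall i z w, inT z w -> Rabs (u i z w - v i z w) <= rho w) ->
  forall i z w, inT z w -> Rabs (G u i z w - G v i z w) <= C * rho w.

Local Notation Tc := (Tc a G g).
Local Notation Te := (Te a G g).
Local Notation ew := (ew a C).
Let contr := contr a m M Ha Hm Hab G g C HC HG2.

Fixpoint iter (n : nat) : bool -> R -> R -> R :=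
  match n with O => fun _ _ _ => 0 | S n => Te (iter n) end.

Lemma iter_cont n i : cont2 (iter n i).
Proof.
  revert i. induction n; intros i.
  - intros z w eps He. exists 1; split; [lra|]. intros. simpl. rewrite Rminus_diag, Rabs_R0; auto.
  - simpl. apply (Te_cont2 a m M Ha Hm Hab G g HG1 Hg); auto.
Qed.

Lemma iter_proj n i z w : iter n i z w = iter n i (pz z w) (pw w).
Proof.
  destruct n; simpl; auto. unfold ModD.Te.
  destruct (proj_id _ _ (proj_in z w)) as [E1 E2]. rewrite E1, E2. auto.
Qed.

Lemma curve_ex (u : bool -> R -> R -> R) i z w x y : (forall i, cont2 (u i)) ->
  ex_RInt (fun s => G u i (phi z s) (phi w s)) x y.
Proof. intros H. apply ex_RInt_cont1. apply (curve_cont a m M Ha Hm Hab). apply HG1; auto. Qed.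

Definition B0 : R :=
  proj1_sig (constructive_indefinite_description _ (cont2_bounded _ (iter_cont 1 true))) +
  proj1_sig (constructive_indefinite_description _ (cont2_bounded _ (iter_cont 1 false))).

Lemma B0_spec : 0 <= B0 /\ forall i z w, -1 <= z <= 1 -> -1 <= w <= 1 -> Rabs (iter 1 i z w) <= B0.
Proof.
  unfold B0. destruct constructive_indefinite_description as [b1 [P1 Q1]].
  destruct constructive_indefinite_description as [b2 [P2 Q2]]. cbn beta in *.
  cbn [proj1_sig]. split; [lra|]. intros [|] z w Hz Hw.
  - specialize (Q1 z w Hz Hw). lra.
  - specialize (Q2 z w Hz Hw). lra.
Qed.

Lemma inT_box z w : inT z w -> -1 <= z <= 1 /\ -1 <= w <= 1.
Proof. intros [H1 H2]. split; lra. Qed.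

Lemma iter_diff_T n : forall i z w, inT z w ->
  Rabs (iter (S n) i z w - iter n i z w) <= B0 / 2 ^ n * ew w.
Proof.
  destruct B0_spec as [HB0 HB].
  induction n; intros i z w HP.
  - simpl pow. rewrite Rdiv_1_r. simpl iter at 2. rewrite Rminus_0_r.
    destruct (inT_box z w HP).
    eapply Rle_trans; [apply HB; auto|].
    pose proof (ew_ge1 a m M Ha Hm Hab C HC w ltac:(destruct HP; lra)). nra.
  - change (iter (S (S n)) i z w) with (Te (iter (S n)) i z w).
    change (iter (S n) i z w) with (Te (iter n) i z w).
    rewrite !(Te_T a G g); auto.
    replace (B0 / 2 ^ S n) with (B0 / 2 ^ n / 2) by (simpl; field; apply pow_nonzero; lra).
    apply contr; auto.
    + apply Rdiv_le_0_compat; auto. apply pow_lt; lra.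
    + intros; apply curve_ex; intros; apply iter_cont.
    + intros; apply curve_ex; intros; apply iter_cont.
Qed.

Definition Aconst := B0 * ew 1.

Lemma iter_diff n i z w : Rabs (iter (S n) i z w - iter n i z w) <= Aconst / 2 ^ n.
Proof.
  destruct B0_spec as [HB0 _].
  rewrite (iter_proj (S n)), (iter_proj n).
  eapply Rle_trans; [apply iter_diff_T, proj_in|].
  unfold Aconst. replace (B0 * ew 1 / 2 ^ n) with (B0 / 2 ^ n * ew 1) by (field; apply pow_nonzero; lra).
  apply Rmult_le_compat_l. apply Rdiv_le_0_compat; auto. apply pow_lt; lra.
  apply (ew_le a m M Ha Hm Hab C HC). apply pw_in.
Qed.

Lemma Aconst_pos : 0 <= Aconst.
Proof.
  destruct B0_spec as [HB0 _]. unfold Aconst.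
  pose proof (ew_ge1 a m M Ha Hm Hab C HC 1 ltac:(lra)). nra.
Qed.

Definition U i z w : R := Lim_seq (fun n => iter n i z w).

Lemma U_approx n i z w : Rabs (U i z w - iter n i z w) <= 2 * Aconst / 2 ^ n.
Proof. unfold U. apply (geom_limit (fun n => iter n i z w)). apply Aconst_pos. intros; apply iter_diff. Qed.

Lemma U_cont i : cont2 (U i).
Proof.
  apply (unif_lim_cont2 (fun n => iter n i) (U i) (fun n => 2 * Aconst / 2 ^ n)).
  - intros; apply iter_cont.
  - intros; apply U_approx.
  - intros. apply pow2_small; auto.
Qed.

Lemma U_fix i z w : inT z w -> U i z w = Tc U i z w.
Proof.
  intros HP. apply Rminus_diag_uniq.
  apply (zero_of_pow2 _ (Aconst + Aconst * ew 1)). intros n.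
  assert (E1 : iter (S n) i z w = Tc (iter n) i z w) by (apply (Te_T a G g); auto).
  assert (H1 := U_approx (S n) i z w).
  assert (H2 : Rabs (Tc U i z w - Tc (iter n) i z w) <= (2 * Aconst / 2 ^ n) / 2 * ew w).
  { apply contr; auto.
    - apply Rdiv_le_0_compat. pose proof Aconst_pos; lra. apply pow_lt; lra.
    - intros; apply curve_ex; intros; apply U_cont.
    - intros; apply curve_ex; intros; apply iter_cont.
    - intros i' z' w' HP'. eapply Rle_trans; [apply U_approx|].
      pose proof (ew_ge1 a m M Ha Hm Hab C HC w' ltac:(destruct HP'; lra)).
      assert (0 <= 2 * Aconst / 2 ^ n) by (apply Rdiv_le_0_compat; [pose proof Aconst_pos; lra|apply pow_lt; lra]).
      nra. }
  rewrite E1 in H1.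
  assert (Hew : ew w <= ew 1) by (apply (ew_le a m M Ha Hm Hab C HC); destruct HP; lra).
  assert (Hp : 0 < 2 ^ n) by (apply pow_lt; lra).
  assert (Hq : 2 * Aconst / 2 ^ S n = Aconst / 2 ^ n) by (simpl; field; lra).
  rewrite Hq in H1.
  assert (Hr : 2 * Aconst / 2 ^ n / 2 * ew w <= Aconst * ew 1 / 2 ^ n).
  { replace (2 * Aconst / 2 ^ n / 2 * ew w) with (Aconst * ew w / 2 ^ n) by (field; lra).
    unfold Rdiv. apply Rmult_le_compat_r. left; apply Rinv_0_lt_compat; lra.
    apply Rmult_le_compat_l; auto. apply Aconst_pos. }
  replace ((Aconst + Aconst * ew 1) / 2 ^ n) with (Aconst / 2 ^ n + Aconst * ew 1 / 2 ^ n) by (field; lra).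
  split_Rabs; lra.
Qed.

Lemma U_bd i w : 0 <= w <= 1 -> U i (- w) w = g i w.
Proof.
  intros Hw. rewrite U_fix by (split; lra). unfold ModD.Tc.
  rewrite (sig0_anti a m M Ha Hm Hab w Hw). rewrite (phi0 a m M Ha Hm Hab).
  rewrite RInt_point. change (@zero R_CompleteNormedModule) with 0. ring.
Qed.

End Core4.

End ModF.
Import ModF.

Module ModG.
Open Scope R_scope.

Lemma bound_T f : cont_T f -> exists B, 0 <= B /\ forall z w, inT z w -> Rabs (f z w) <= B.
Proof.
  intros H. destruct (cont2_bounded _ (cont_T_ext f H)) as [B [HB HB']].
  exists B; split; auto. intros z w HP.
  destruct (proj_id z w HP) as [E1 E2].
  specialize (HB' z w). rewrite E1, E2 in HB'. destruct HP. apply HB'; lra.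
Qed.

Section Core5.
Variable a : R -> R.
Variables m M : R.
Hypothesis Ha : cont1 a.
Hypothesis Hm : 0 < m.
Hypothesis Hab : forall x, m <= a x <= M.
Local Notation phi := (ModB.phi a).
Local Notation Lam := (ModB.Lam a).
Local Notation sig := (sig0 a).
Let mM : m <= M := mM a m M Hab.

Variable G : (bool -> R -> R -> R) -> bool -> R -> R -> R.
Variable g : bool -> R -> R.
Hypothesis HG1 : forall u, (forall i, cont2 (u i)) -> forall i, cont2 (G u i).
Hypothesis Hg : forall i, cont1 (g i).
Variable C : R.
Hypothesis HC : 0 <= C.
Hypothesis HG2 : forall u v (rho : R -> R),
  (forall i z w, inT z w -> Rabs (u i z w - v i z w) <= rho w) ->
  forall i z w, inT z w -> Rabs (G u i z w - G v i z w) <= C * rho w.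

Local Notation Tc := (Tc a G g).
Local Notation ew := (ew a C).
Let contr := contr a m M Ha Hm Hab G g C HC HG2.
Local Notation U := (ModF.U a G g).

Lemma U_char i : char_sol_T a (U i) (G U i).
Proof.
  intros s0 s1 zc wc [Hs [Hz [Hw Hin]]].
  set (z0 := zc s0). set (w0 := wc s0). set (t := s1 - s0).
  assert (Fz := curve_flow a m M Ha Hm Hab zc s0 s1 Hs Hz).
  assert (Fw := curve_flow a m M Ha Hm Hab wc s0 s1 Hs Hw).
  fold z0 in Fz. fold w0 in Fw.
  assert (HP0 : inT z0 w0) by (apply Hin; unfold inI; lra).
  assert (HP1 : inT (phi z0 t) (phi w0 t)).
  { unfold t. rewrite <- (Fz s1), <- (Fw s1) by (unfold inI; lra). apply Hin; unfold inI; lra. }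
  rewrite (Fz s1), (Fw s1) by (unfold inI; lra). fold t.
  set (H0 := fun r => G U i (phi z0 r) (phi w0 r)).
  assert (HU : forall i, cont2 (U i)) by (intros; apply (U_cont a m M Ha Hm Hab G g HG1 Hg C HC HG2)).
  assert (Ex : forall x y, ex_RInt H0 x y) by (intros; apply (curve_ex a m M Ha Hm Hab G HG1); auto).
  set (s := sig z0 w0).
  assert (Key : U i (phi z0 t) (phi w0 t) - U i z0 w0 = RInt H0 0 t).
  { rewrite (U_fix a m M Ha Hm Hab G g HG1 Hg C HC HG2 i _ _ HP1).
    rewrite (U_fix a m M Ha Hm Hab G g HG1 Hg C HC HG2 i _ _ HP0).
    unfold ModD.Tc. rewrite (sig0_shift a m M Ha Hm Hab z0 w0 t HP0 HP1). fold s.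
    rewrite (phi_comp a m M Ha Hm Hab). replace (t + (s - t)) with s by ring.
    assert (I1 : is_RInt H0 (1 * (s - t) + t) (1 * 0 + t) (RInt H0 s t)).
    { replace (1 * (s - t) + t) with s by ring. replace (1 * 0 + t) with t by ring.
      apply (RInt_correct (V := R_CompleteNormedModule)); auto. }
    apply is_RInt_comp_lin in I1.
    assert (I2 : is_RInt (fun r => G U i (phi (phi z0 t) r) (phi (phi w0 t) r)) (s - t) 0 (RInt H0 s t)).
    { eapply is_RInt_ext; [|exact I1]. intros x _. change (scal ?u ?v) with (u * v). cbv beta. rewrite Rmult_1_l.
      unfold H0. rewrite !(phi_comp a m M Ha Hm Hab). f_equal; f_equal; ring. }
    rewrite (is_RInt_unique _ _ _ _ I2).
    assert (E : RInt H0 s 0 + RInt H0 0 t = RInt H0 s t) by (apply (RInt_Chasles (V := R_CompleteNormedModule)); auto).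
    fold H0. lra. }
  rewrite Key.
  assert (I3 : is_RInt H0 (1 * s0 + - s0) (1 * s1 + - s0) (RInt H0 0 t)).
  { replace (1 * s0 + - s0) with 0 by ring. replace (1 * s1 + - s0) with t by (unfold t; ring).
    apply (RInt_correct (V := R_CompleteNormedModule)); auto. }
  apply is_RInt_comp_lin in I3.
  eapply is_RInt_ext; [|exact I3]. intros x Hx. rewrite Rmin_left, Rmax_right in Hx by lra.
  change (scal ?u ?v) with (u * v). cbv beta. rewrite Rmult_1_l. unfold H0.
  rewrite (Fz x), (Fw x) by (unfold inI; lra). f_equal; f_equal; ring.
Qed.

Lemma sol_fix (V : bool -> R -> R -> R) : (forall i, char_sol_T a (V i) (G V i)) ->
  (forall i w, 0 <= w <= 1 -> V i (- w) w = g i w) ->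
  forall i z w, inT z w -> ex_RInt (fun s => G V i (phi z s) (phi w s)) (sig z w) 0 /\ V i z w = Tc V i z w.
Proof.
  intros Hsol Hbd i z w HP.
  set (s := sig z w).
  destruct (sig0_spec a m M Ha Hm Hab z w HP) as [[Hs1 Hs2] Hg0]. fold s in Hs1, Hs2, Hg0.
  assert (Hc : char_curve_T a s 0 (phi z) (phi w)).
  { split; [lra|]. split; [|split].
    - apply is_derive_hd. intros; apply (phi_derive a m M Ha Hm Hab).
    - apply is_derive_hd. intros; apply (phi_derive a m M Ha Hm Hab).
    - intros x Hx. apply (curve_in_T a m M Ha Hm Hab); [auto|]. unfold inI in Hx. fold s. lra. }
  specialize (Hsol i s 0 (phi z) (phi w) Hc).
  assert (HT := curve_in_T a m M Ha Hm Hab z w s HP ltac:(fold s; lra)).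
  assert (Eh : phi z s = - phi w s) by (unfold gP in Hg0; lra).
  rewrite Eh in Hsol. rewrite Hbd in Hsol by (destruct HT; lra).
  rewrite !(phi0 a m M Ha Hm Hab) in Hsol.
  split.
  - exists (V i z w - g i (phi w s)); auto.
  - unfold ModD.Tc. fold s. rewrite (is_RInt_unique _ _ _ _ Hsol). ring.
Qed.

Lemma uniq (V1 V2 : bool -> R -> R -> R) :
  (forall i, cont_T (V1 i)) -> (forall i, char_sol_T a (V1 i) (G V1 i)) -> (forall i w, 0 <= w <= 1 -> V1 i (- w) w = g i w) ->
  (forall i, cont_T (V2 i)) -> (forall i, char_sol_T a (V2 i) (G V2 i)) -> (forall i w, 0 <= w <= 1 -> V2 i (- w) w = g i w) ->
  forall i z w, inT z w -> V1 i z w = V2 i z w.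
Proof.
  intros C1 S1 B1 C2 S2 B2.
  destruct (bound_T _ (C1 true)) as [b1 [P1 Q1]].
  destruct (bound_T _ (C1 false)) as [b2 [P2 Q2]].
  destruct (bound_T _ (C2 true)) as [b3 [P3 Q3]].
  destruct (bound_T _ (C2 false)) as [b4 [P4 Q4]].
  set (Bd := b1 + b2 + b3 + b4).
  assert (HBd : 0 <= Bd) by (unfold Bd; lra).
  assert (H0 : forall i z w, inT z w -> Rabs (V1 i z w - V2 i z w) <= Bd).
  { intros [|] z w HP.
    - specialize (Q1 z w HP). specialize (Q3 z w HP). unfold Bd. split_Rabs; lra.
    - specialize (Q2 z w HP). specialize (Q4 z w HP). unfold Bd. split_Rabs; lra. }
  assert (Hn : forall n i z w, inT z w -> Rabs (V1 i z w - V2 i z w) <= Bd / 2 ^ n * ew w).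
  { induction n; intros i z w HP.
    - simpl. rewrite Rdiv_1_r. pose proof (ew_ge1 a m M Ha Hm Hab C HC w ltac:(destruct HP; lra)).
      specialize (H0 i z w HP). nra.
    - destruct (sol_fix V1 S1 B1 i z w HP) as [_ E1].
      destruct (sol_fix V2 S2 B2 i z w HP) as [_ E2].
      rewrite E1, E2.
      replace (Bd / 2 ^ S n) with (Bd / 2 ^ n / 2) by (simpl; field; apply pow_nonzero; lra).
      apply contr; auto.
      + apply Rdiv_le_0_compat; auto. apply pow_lt; lra.
      + intros; apply (sol_fix V1 S1 B1); auto.
      + intros; apply (sol_fix V2 S2 B2); auto. }
  intros i z w HP. apply Rminus_diag_uniq. apply (zero_of_pow2 _ (Bd * ew 1)). intros n.
  eapply Rle_trans; [apply Hn; auto|].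
  assert (Hew : ew w <= ew 1) by (apply (ew_le a m M Ha Hm Hab C HC); destruct HP; lra).
  assert (Hp : 0 < 2 ^ n) by (apply pow_lt; lra).
  replace (Bd * ew 1 / 2 ^ n) with (Bd / 2 ^ n * ew 1) by (field; lra).
  apply Rmult_le_compat_l; auto. apply Rdiv_le_0_compat; lra.
Qed.

End Core5.

Theorem core_thm (a : R -> R) (m M : R) (Ha : cont1 a) (Hm : 0 < m) (Hab : forall x, m <= a x <= M)
  (G : (bool -> R -> R -> R) -> bool -> R -> R -> R) (g : bool -> R -> R)
  (HG1 : forall u, (forall i, cont2 (u i)) -> forall i, cont2 (G u i))
  (Hg : forall i, cont1 (g i)) (C : R) (HC : 0 <= C)
  (HG2 : forall u v (rho : R -> R),
    (forall i z w, inT z w -> Rabs (u i z w - v i z w) <= rho w) ->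
    forall i z w, inT z w -> Rabs (G u i z w - G v i z w) <= C * rho w) :
  (exists U, (forall i, cont_T (U i)) /\ (forall i, char_sol_T a (U i) (G U i)) /\
     (forall i w, 0 <= w <= 1 -> U i (- w) w = g i w)) /\
  (forall V1 V2,
    (forall i, cont_T (V1 i)) -> (forall i, char_sol_T a (V1 i) (G V1 i)) -> (forall i w, 0 <= w <= 1 -> V1 i (- w) w = g i w) ->
    (forall i, cont_T (V2 i)) -> (forall i, char_sol_T a (V2 i) (G V2 i)) -> (forall i w, 0 <= w <= 1 -> V2 i (- w) w = g i w) ->
    forall i z w, inT z w -> V1 i z w = V2 i z w).
Proof.
  split.
  - exists (ModF.U a G g). split; [|split].
    + intros i. apply cont2_cont_T. apply (U_cont a m M Ha Hm Hab G g HG1 Hg C HC HG2).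
    + apply (U_char a m M Ha Hm Hab G g HG1 Hg C HC HG2).
    + apply (U_bd a m M Ha Hm Hab G g HG1 Hg C HC HG2).
  - apply (uniq a m M Ha Hm Hab G g C HC HG2).
Qed.

End ModG.
Import ModG.

Module ModH.
Open Scope R_scope.

Lemma hd_ext s0 s1 f df df' : (forall s, inI s0 s1 s -> df s = df' s) ->
  has_deriv_on s0 s1 f df -> has_deriv_on s0 s1 f df'.
Proof. intros E H x Hx eps He. rewrite <- E by auto. apply H; auto. Qed.

Lemma hd_sub s0 s1 s0' s1' f df : s0 <= s0' -> s1' <= s1 ->
  has_deriv_on s0 s1 f df -> has_deriv_on s0' s1' f df.
Proof.
  intros H1 H2 H x Hx eps He. destruct (H x ltac:(unfold inI in *; lra) eps He) as [d [Hd H']].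
  exists d; split; auto. intros y Hy. apply H'. unfold inI in *; lra.
Qed.

Lemma hd_rev s0 s1 f df e : has_deriv_on s0 s1 f df ->
  has_deriv_on (- s1) (- s0) (fun t => e * f (- t)) (fun t => - e * df (- t)).
Proof.
  intros H x Hx eps He.
  destruct (Req_dec e 0) as [E|E].
  { exists 1; split; [lra|]. intros y _ Hne _. subst e.
    replace ((0 * f (- y) - 0 * f (- x)) / (y - x) - - 0 * df (- x)) with 0 by (field; lra).
    rewrite Rabs_R0; auto. }
  assert (He' : 0 < eps / Rabs e) by (apply Rdiv_lt_0_compat; auto; apply Rabs_pos_lt; auto).
  destruct (H (- x) ltac:(unfold inI in *; lra) _ He') as [d [Hd H']].
  exists d; split; auto. intros y Hy Hne Hyx.
  specialize (H' (- y) ltac:(unfold inI in *; lra) ltac:(lra) ltac:(replace (- y - - x) with (- (y - x)) by ring; rewrite Rabs_Ropp; auto)).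
  replace ((e * f (- y) - e * f (- x)) / (y - x) - - e * df (- x)) with
     (- e * ((f (- y) - f (- x)) / (- y - - x) - df (- x))) by (field; lra).
  rewrite Rabs_mult, Rabs_Ropp.
  apply (Rmult_lt_reg_r (/ Rabs e)). apply Rinv_0_lt_compat, Rabs_pos_lt; auto.
  replace (Rabs e * Rabs ((f (- y) - f (- x)) / (- y - - x) - df (- x)) * / Rabs e) with
     (Rabs ((f (- y) - f (- x)) / (- y - - x) - df (- x))) by (field; apply Rabs_no_R0; auto).
  exact H'.
Qed.

Lemma hd_neg s0 s1 f df : has_deriv_on s0 s1 f df -> has_deriv_on s0 s1 (fun t => - f t) (fun t => - df t).
Proof.
  intros H x Hx eps He. destruct (H x Hx eps He) as [d [Hd H']]. exists d; split; auto.
  intros y Hy Hne Hyx. specialize (H' y Hy Hne Hyx).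
  replace ((- f y - - f x) / (y - x) - - df x) with (- ((f y - f x) / (y - x) - df x)) by (field; lra).
  rewrite Rabs_Ropp; auto.
Qed.

Lemma rev_RInt f t0 t1 l : is_RInt f (- t1) (- t0) l -> is_RInt (fun y => - f (- y)) t0 t1 (- l).
Proof.
  intros H. apply is_RInt_swap in H. apply (is_RInt_comp_opp (V := R_NormedModule)) in H.
  exact H.
Qed.

Lemma cont1_abs f : cont1 f -> cont1 (fun x => Rabs (f x)).
Proof.
  intros H x eps He. destruct (H x eps He) as [d [Hd H']]. exists d; split; auto.
  intros y Hy. eapply Rle_lt_trans; [apply Rabs_triang_inv2|]. apply H'; auto.
Qed.

Lemma cont1_negarg f : cont1 f -> cont1 (fun x => f (- x)).
Proof.
  intros H x eps He. destruct (H (- x) eps He) as [d [Hd H']]. exists d; split; auto.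
  intros y Hy. apply H'. replace (- y - - x) with (- (y - x)) by ring. rewrite Rabs_Ropp; auto.
Qed.

Lemma cont2_mulz f u : cont1 f -> cont2 u -> cont2 (fun z w => f z * u z w).
Proof.
  intros Hf Hu z w eps He.
  assert (Hc := continuity_pt_mult (fun p => f p) (fun p => 0) z).
  set (A := Rabs (f z) + 1). set (Bu := Rabs (u z w) + 1).
  assert (HA : 0 < A) by (unfold A; pose proof (Rabs_pos (f z)); lra).
  assert (HB : 0 < Bu) by (unfold Bu; pose proof (Rabs_pos (u z w)); lra).
  set (e1 := Rmin 1 (eps / (2 * Bu))).
  assert (He1 : 0 < e1) by (unfold e1; apply Rmin_pos; [lra|apply Rdiv_lt_0_compat; lra]).
  set (e2 := Rmin 1 (eps / (4 * (A + 1)))).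
  assert (He2 : 0 < e2) by (unfold e2; apply Rmin_pos; [lra|apply Rdiv_lt_0_compat; lra]).
  destruct (Hf z e1 He1) as [d1 [Hd1 H1]]. destruct (Hu z w e2 He2) as [d2 [Hd2 H2]].
  exists (Rmin d1 d2); split; [apply Rmin_pos; auto|]. intros z' w' Hz Hw.
  pose proof (Rmin_l d1 d2). pose proof (Rmin_r d1 d2).
  specialize (H1 z' ltac:(lra)). specialize (H2 z' w' ltac:(lra) ltac:(lra)).
  replace (f z' * u z' w' - f z * u z w) with ((f z' - f z) * u z w + f z' * (u z' w' - u z w)) by ring.
  eapply Rle_lt_trans; [apply Rabs_triang|]. rewrite !Rabs_mult.
  assert (E1 : Rabs (f z' - f z) <= eps / (2 * Bu)) by (pose proof (Rmin_r 1 (eps / (2 * Bu))); unfold e1 in H1; lra).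
  assert (E2 : Rabs (u z' w' - u z w) < eps / (4 * (A + 1))) by (pose proof (Rmin_r 1 (eps / (4 * (A + 1)))); unfold e2 in H2; lra).
  assert (E3 : Rabs (f z') <= A + 1).
  { pose proof (Rabs_triang_inv (f z') (f z)). pose proof (Rmin_l 1 (eps / (2 * Bu))). unfold A, e1 in *. lra. }
  assert (Hu' : Rabs (u z w) <= Bu) by (unfold Bu; lra).
  apply Rle_lt_trans with (eps / (2 * Bu) * Bu + (A + 1) * (eps / (4 * (A + 1)))).
  - apply Rplus_le_compat.
    + apply Rmult_le_compat; auto; apply Rabs_pos.
    + apply Rmult_le_compat; try apply Rabs_pos; try lra.
  - replace (eps / (2 * Bu) * Bu + (A + 1) * (eps / (4 * (A + 1)))) with (3 * eps / 4) by (field; lra). lra.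
Qed.

Lemma cont2_negz u : cont2 u -> cont2 (fun z w => u (- z) w).
Proof.
  intros H z w eps He. destruct (H (- z) w eps He) as [d [Hd H']]. exists d; split; auto.
  intros z' w' Hz Hw. apply H'; auto. replace (- z' - - z) with (- (z' - z)) by ring. rewrite Rabs_Ropp; auto.
Qed.

Lemma cont2_plus u v : cont2 u -> cont2 v -> cont2 (fun z w => u z w + v z w).
Proof.
  intros Hu Hv z w eps He. destruct (Hu z w (eps/2) ltac:(lra)) as [d1 [Hd1 H1]].
  destruct (Hv z w (eps/2) ltac:(lra)) as [d2 [Hd2 H2]].
  exists (Rmin d1 d2); split; [apply Rmin_pos; auto|]. intros z' w' Hz Hw.
  pose proof (Rmin_l d1 d2). pose proof (Rmin_r d1 d2).
  specialize (H1 z' w' ltac:(lra) ltac:(lra)). specialize (H2 z' w' ltac:(lra) ltac:(lra)).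
  split_Rabs; lra.
Qed.

Lemma cont1_bound f : cont1 f -> exists B, 0 <= B /\ forall x, -1 <= x <= 1 -> Rabs (f x) <= B.
Proof.
  intros H. destruct (continuity_ab_maj (fun x => Rabs (f x)) (-1) 1 ltac:(lra)) as [x0 [H0 _]].
  - intros c _. apply cont1_pt, cont1_abs; auto.
  - exists (Rabs (f x0)); split; [apply Rabs_pos|]. auto.
Qed.

Lemma clamp_bound f : cont_on (-1) 1 f -> exists B, 0 <= B /\ forall x, Rabs (f (clamp (-1) 1 x)) <= B.
Proof.
  intros H. destruct (cont1_bound _ (cont_on_clamp (-1) 1 f ltac:(lra) H)) as [B [HB HB']].
  exists B; split; auto. intros x. specialize (HB' (clamp (-1) 1 x) (clamp_in (-1) 1 x ltac:(lra))).
  rewrite (clamp_id (-1) 1 (clamp (-1) 1 x)) in HB' by (apply clamp_in; lra). auto.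
Qed.

Lemma pos_bounds f : cont_on (-1) 1 f -> (forall x, inI (-1) 1 x -> 0 < f x) ->
  exists m M, 0 < m /\ forall x, m <= f (clamp (-1) 1 x) <= M.
Proof.
  intros H Hp. assert (Hc := cont_on_clamp (-1) 1 f ltac:(lra) H).
  destruct (continuity_ab_min (fun x => f (clamp (-1) 1 x)) (-1) 1 ltac:(lra)) as [x0 [H0 Hx0]].
  { intros; apply cont1_pt; auto. }
  destruct (continuity_ab_maj (fun x => f (clamp (-1) 1 x)) (-1) 1 ltac:(lra)) as [x1 [H1 Hx1]].
  { intros; apply cont1_pt; auto. }
  exists (f (clamp (-1) 1 x0)), (f (clamp (-1) 1 x1)). split.
  - apply Hp. apply clamp_in; lra.
  - intros x. pose proof (clamp_in (-1) 1 x ltac:(lra)).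
    specialize (H0 (clamp (-1) 1 x) H2). specialize (H1 (clamp (-1) 1 x) H2).
    rewrite (clamp_id (-1) 1 (clamp (-1) 1 x)) in H0, H1 by auto. lra.
Qed.

Lemma hd_cont_on s0 s1 f df : has_deriv_on s0 s1 f df -> cont_on s0 s1 f.
Proof. intros H x Hx. apply (hd_cont s0 s1 f df x H Hx). Qed.

Lemma char_glue (az aw a : R -> R) m M (Ha : cont1 a) (Hm : 0 < m) (Hab : forall x, m <= a x <= M)
  (Haw : forall x, -1 <= x <= 1 -> aw x = a x) (L F : R -> R -> R) :
  (forall s0 s1 zc wc, char_curve az aw s0 s1 zc wc -> (forall s, inI s0 s1 s -> 0 <= wc s) ->
     is_RInt (fun s => F (zc s) (wc s)) s0 s1 (L (zc s1) (wc s1) - L (zc s0) (wc s0))) ->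
  (forall s0 s1 zc wc, char_curve az aw s0 s1 zc wc -> (forall s, inI s0 s1 s -> wc s <= 0) ->
     is_RInt (fun s => F (zc s) (wc s)) s0 s1 (L (zc s1) (wc s1) - L (zc s0) (wc s0))) ->
  char_solution az aw L F.
Proof.
  intros HP HN s0 s1 zc wc Hc.
  destruct Hc as [Hs [Hz [Hw Hin]]].
  assert (Hw' : has_deriv_on s0 s1 wc (fun s => a (wc s))).
  { apply (hd_ext _ _ _ (fun s => aw (wc s))); auto. intros s Hs'. apply Haw.
    destruct (Hin s Hs') as [_ [H _]]. auto. }
  assert (Fw := curve_flow a m M Ha Hm Hab wc s0 s1 Hs Hw').
  assert (Mono : forall s s', inI s0 s1 s -> inI s0 s1 s' -> s <= s' -> wc s <= wc s').
  { intros s s' H1 H2 H3. rewrite (Fw s H1), (Fw s' H2).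
    pose proof (phi_mono_s a m M Ha Hm Hab (wc s0) (s - s0) (s' - s0) ltac:(lra)). nra. }
  destruct (Rle_dec 0 (wc s0)) as [H0|H0].
  { apply HP; [exact (conj Hs (conj Hz (conj Hw Hin)))|]. intros s2 Hs'. pose proof (Mono s0 s2 ltac:(unfold inI in *; lra) Hs' ltac:(unfold inI in *; lra)). lra. }
  destruct (Rle_dec (wc s1) 0) as [H1|H1].
  { apply HN; [exact (conj Hs (conj Hz (conj Hw Hin)))|]. intros s2 Hs'. pose proof (Mono s2 s1 Hs' ltac:(unfold inI in *; lra) ltac:(unfold inI in *; lra)). lra. }
  set (w0 := wc s0) in *.
  set (ss := s0 + (Lam a 0 - Lam a w0)).
  assert (Hss0 : s0 <= ss).
  { pose proof (Lam_mono a m M Ha Hm Hab w0 0 ltac:(lra)). unfold ss. lra. }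
  assert (Hss1 : ss <= s1).
  { destruct (Rle_dec ss s1) as [h|h]; auto. exfalso.
    rewrite (Fw s1) in H1 by (unfold inI; lra).
    pose proof (phi_mono_s a m M Ha Hm Hab w0 (s1 - s0) (ss - s0) ltac:(lra)).
    replace (ss - s0) with (Lam a 0 - Lam a w0) in H by (unfold ss; ring).
    rewrite (phi_at_s0 a m M Ha Hm Hab w0) in H. apply Rnot_le_lt in H1. apply Rnot_le_lt in h. assert (0 < m * (ss - s1)) by (apply Rmult_lt_0_compat; lra). assert (Ess : ss = s0 + (Lam a 0 - Lam a w0)) by reflexivity. nra. }
  assert (Hwss : wc ss = 0).
  { rewrite (Fw ss) by (unfold inI; lra). replace (ss - s0) with (Lam a 0 - Lam a w0) by (unfold ss; ring).
    apply (phi_at_s0 a m M Ha Hm Hab). }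
  assert (I1 : is_RInt (fun s => F (zc s) (wc s)) s0 ss (L (zc ss) (wc ss) - L (zc s0) (wc s0))).
  { apply HN.
    - refine (conj _ (conj _ (conj _ _))).
      + lra.
      + apply (hd_sub s0 s1); auto; lra.
      + apply (hd_sub s0 s1); auto; lra.
      + intros s2 Hs'. apply Hin. unfold inI in *; lra.
    - intros s2 Hs'. rewrite <- Hwss. apply Mono; unfold inI in *; lra. }
  assert (I2 : is_RInt (fun s => F (zc s) (wc s)) ss s1 (L (zc s1) (wc s1) - L (zc ss) (wc ss))).
  { apply HP.
    - refine (conj _ (conj _ (conj _ _))).
      + lra.
      + apply (hd_sub s0 s1); auto; lra.
      + apply (hd_sub s0 s1); auto; lra.
      + intros s2 Hs'. apply Hin. unfold inI in *; lra.
    - intros s2 Hs'. rewrite <- Hwss. apply Mono; unfold inI in *; lra. }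
  assert (E : L (zc s1) (wc s1) - L (zc s0) (wc s0) =
    (L (zc ss) (wc ss) - L (zc s0) (wc s0)) + (L (zc s1) (wc s1) - L (zc ss) (wc ss))) by ring.
  unfold w0. rewrite E. exact (is_RInt_Chasles _ _ _ _ _ _ I1 I2).
Qed.

End ModH.
Import ModH.

Module ModI.
Open Scope R_scope.

Definition clp (f : R -> R) (x : R) := f (clamp (-1) 1 x).

Lemma clp_id f x : -1 <= x <= 1 -> clp f x = f x.
Proof. intros H. unfold clp. rewrite clamp_id; auto. Qed.

Lemma clamp_neg x : clamp (-1) 1 (- x) = - clamp (-1) 1 x.
Proof. unfold clamp, Rmax, Rmin. repeat destruct Rle_dec; lra. Qed.

Lemma clp_cont1 f : cont_on (-1) 1 f -> cont1 (clp f).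
Proof. intros H. apply (cont_on_clamp (-1) 1 f ltac:(lra) H). Qed.

Lemma abs_lin p q x y P Q r : Rabs p <= P -> Rabs q <= Q -> Rabs x <= r -> Rabs y <= r ->
  Rabs (p * x + q * y) <= (P + Q) * r.
Proof.
  intros. eapply Rle_trans; [apply Rabs_triang|]. rewrite !Rabs_mult.
  assert (Rabs p * Rabs x <= P * r) by (apply Rmult_le_compat; auto; apply Rabs_pos).
  assert (Rabs q * Rabs y <= Q * r) by (apply Rmult_le_compat; auto; apply Rabs_pos). lra.
Qed.

Lemma inT_neg z w : inT z w -> inT (- z) w.
Proof. intros [H1 H2]. split; lra. Qed.

Lemma hd_fext s0 s1 f f' df : (forall s, f s = f' s) -> has_deriv_on s0 s1 f df -> has_deriv_on s0 s1 f' df.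
Proof.
  intros E H x Hx eps He. destruct (H x Hx eps He) as [d [Hd H']]. exists d; split; auto.
  intros y Hy Hne Hyx. rewrite <- !E. auto.
Qed.

Lemma hd_revneg s0 s1 f (A B : R -> R) : (forall s, inI s0 s1 s -> -1 <= f s <= 1) ->
  (forall x, -1 <= x <= 1 -> A x = B (- x)) -> has_deriv_on s0 s1 f (fun s => A (f s)) ->
  has_deriv_on (- s1) (- s0) (fun t => - f (- t)) (fun t => B (- f (- t))).
Proof.
  intros Hf HAB H. assert (H' := hd_rev s0 s1 f _ (-1) H).
  apply (hd_fext _ _ _ (fun t => - f (- t))) in H'; [|intros; ring].
  eapply hd_ext; [|exact H']. intros s Hs. cbv beta. rewrite HAB by (apply Hf; unfold inI in *; lra). ring.
Qed.

Lemma hd_revpos s0 s1 f (A B : R -> R) : (forall s, inI s0 s1 s -> -1 <= f s <= 1) ->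
  (forall x, -1 <= x <= 1 -> A x = - B x) -> has_deriv_on s0 s1 f (fun s => A (f s)) ->
  has_deriv_on (- s1) (- s0) (fun t => f (- t)) (fun t => B (f (- t))).
Proof.
  intros Hf HAB H. assert (H' := hd_rev s0 s1 f _ 1 H).
  apply (hd_fext _ _ _ (fun t => f (- t))) in H'; [|intros; ring].
  eapply hd_ext; [|exact H']. intros s Hs. cbv beta. rewrite HAB by (apply Hf; unfold inI in *; lra). ring.
Qed.

Lemma hd_negB s0 s1 f (A B : R -> R) : (forall s, inI s0 s1 s -> -1 <= f s <= 1) ->
  (forall x, -1 <= x <= 1 -> A x = - B (- x)) -> has_deriv_on s0 s1 f (fun s => A (f s)) ->
  has_deriv_on s0 s1 (fun t => - f t) (fun t => B (- f t)).
Proof.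
  intros Hf HAB H. assert (H' := hd_neg s0 s1 f _ H).
  eapply hd_ext; [|exact H']. intros s Hs. cbv beta. rewrite HAB by (apply Hf; unfold inI in *; lra). ring.
Qed.

Lemma hd_same s0 s1 f (A B : R -> R) : (forall s, inI s0 s1 s -> -1 <= f s <= 1) ->
  (forall x, -1 <= x <= 1 -> A x = B x) -> has_deriv_on s0 s1 f (fun s => A (f s)) ->
  has_deriv_on s0 s1 f (fun t => B (f t)).
Proof.
  intros Hf HAB H. eapply hd_ext; [|exact H]. intros s Hs. cbv beta. rewrite HAB by (apply Hf; unfold inI in *; lra). auto.
Qed.

Lemma Rabs_le_inv a b : Rabs a <= b -> - b <= a <= b.
Proof. intros; split_Rabs; lra. Qed.

Lemma inE_box z w : inE z w -> -1 <= z <= 1 /\ -1 <= w <= 1.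
Proof. intros [H1 [H2 _]]. auto. Qed.

Lemma inE_T z w : inE z w -> 0 <= w -> inT z w.
Proof. intros [H1 [H2 H3]] Hw. rewrite (Rabs_right w) in H3 by lra. split; [lra|]. apply Rabs_le_inv; auto. Qed.

Lemma inE_Tn z w : inE z w -> w <= 0 -> inT z (- w).
Proof. intros [H1 [H2 H3]] Hw. rewrite (Rabs_left1 w) in H3 by lra. split; [lra|]. apply Rabs_le_inv; auto. Qed.

Lemma inT_E z w : inT z w -> inE z w.
Proof.
  intros [H1 H2]. split; [lra|split; [lra|]]. rewrite (Rabs_right w) by lra. apply Rabs_le; lra.
Qed.

Lemma inT_En z w : inT z w -> inE z (- w).
Proof.
  intros [H1 H2]. split; [lra|split; [lra|]]. rewrite Rabs_Ropp, (Rabs_right w) by lra. apply Rabs_le; lra.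
Qed.

Lemma inE_zero z : inE z 0 -> z = 0.
Proof. intros [_ [_ H]]. rewrite Rabs_R0 in H. pose proof (Rabs_pos z). apply Rabs_eq_0. lra. Qed.

Lemma cont_on_E_T (f : R -> R -> R) e1 e2 : Rabs e1 = 1 -> Rabs e2 = 1 ->
  (forall z w, inT z w -> inE (e1 * z) (e2 * w)) ->
  cont_on_E f -> cont_T (fun z w => f (e1 * z) (e2 * w)).
Proof.
  intros H1 H2 Hin Hf z w HP eps He.
  destruct (Hf _ _ (Hin z w HP) eps He) as [d [Hd H']]. exists d; split; auto.
  intros z' w' HQ Hz Hw. apply H'; auto.
  - rewrite <- Rmult_minus_distr_l, Rabs_mult, H1. lra.
  - rewrite <- Rmult_minus_distr_l, Rabs_mult, H2. lra.
Qed.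

Lemma cont_T_fext f f' : (forall z w, f z w = f' z w) -> cont_T f -> cont_T f'.
Proof.
  intros E H z w HP eps He. destruct (H z w HP eps He) as [d [Hd H']]. exists d; split; auto.
  intros. rewrite <- !E. auto.
Qed.

Lemma cont_on_E_fext f f' : (forall z w, inE z w -> f z w = f' z w) -> cont_on_E f -> cont_on_E f'.
Proof.
  intros E H z w HP eps He. destruct (H z w HP eps He) as [d [Hd H']]. exists d; split; auto.
  intros. rewrite <- !E; auto.
Qed.

Lemma glue_cont (F1 F2 : R -> R -> R) e1 e2 : Rabs e1 = 1 -> Rabs e2 = 1 -> cont_T F1 -> cont_T F2 ->
  F1 0 0 = F2 0 0 ->
  cont_on_E (fun z w => if Rle_dec 0 w then F1 (e1 * z) w else F2 (e2 * z) (- w)).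
Proof.
  intros H1 H2 C1 C2 E0 z w HP eps He.
  assert (T1 : forall z w, inE z w -> 0 <= w -> inT (e1 * z) w).
  { intros z0 w0 HE Hw. destruct (inE_T z0 w0 HE Hw) as [A1 A2]. split; auto.
    apply Rabs_le_inv. rewrite Rabs_mult, H1, Rmult_1_l. apply Rabs_le; lra. }
  assert (T2 : forall z w, inE z w -> w <= 0 -> inT (e2 * z) (- w)).
  { intros z0 w0 HE Hw. destruct (inE_Tn z0 w0 HE Hw) as [A1 A2]. split; auto.
    apply Rabs_le_inv. rewrite Rabs_mult, H2, Rmult_1_l. apply Rabs_le; lra. }
  assert (D1 : forall z z', Rabs (e1 * z' - e1 * z) = Rabs (z' - z)) by (intros; rewrite <- Rmult_minus_distr_l, Rabs_mult, H1; ring).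
  assert (D2 : forall z z', Rabs (e2 * z' - e2 * z) = Rabs (z' - z)) by (intros; rewrite <- Rmult_minus_distr_l, Rabs_mult, H2; ring).
  destruct (Rtotal_order w 0) as [Hw|[Hw|Hw]].
  - destruct (C2 _ _ (T2 z w HP ltac:(lra)) eps He) as [d [Hd H']].
    exists (Rmin d (- w)); split; [apply Rmin_pos; lra|].
    intros z' w' HQ Hz Hw'. pose proof (Rmin_l d (- w)). pose proof (Rmin_r d (- w)).
    destruct (Rle_dec 0 w'); [split_Rabs; lra|]. destruct (Rle_dec 0 w); [lra|].
    apply H'; [apply T2; auto; lra| rewrite D2; lra | split_Rabs; lra].
  - subst w. assert (z = 0) by (apply inE_zero; auto). subst z.
    assert (HT0 : inT 0 0) by (split; lra).
    rewrite Rmult_0_r in *.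
    replace (e1 * 0) with 0 in * by ring.
    destruct (C1 _ _ HT0 eps He) as [d1 [Hd1 H1']].
    destruct (C2 _ _ HT0 eps He) as [d2 [Hd2 H2']].
    exists (Rmin d1 d2); split; [apply Rmin_pos; auto|].
    intros z' w' HQ Hz Hw'. pose proof (Rmin_l d1 d2). pose proof (Rmin_r d1 d2).
    destruct (Rle_dec 0 0); [|lra]. replace (e1 * 0) with 0 by ring.
    destruct (Rle_dec 0 w').
    + rewrite Rminus_0_r in Hz, Hw'. apply H1'; [apply T1; auto| |].
      * rewrite Rminus_0_r, Rabs_mult, H1, Rmult_1_l; lra.
      * rewrite Rminus_0_r; lra.
    + rewrite Rminus_0_r in Hz, Hw'. rewrite E0. apply H2'; [apply T2; auto; lra| |].
      * rewrite Rminus_0_r, Rabs_mult, H2, Rmult_1_l; lra.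
      * rewrite Rminus_0_r, Rabs_Ropp; lra.
  - destruct (C1 _ _ (T1 z w HP ltac:(lra)) eps He) as [d [Hd H']].
    exists (Rmin d w); split; [apply Rmin_pos; lra|].
    intros z' w' HQ Hz Hw'. pose proof (Rmin_l d w). pose proof (Rmin_r d w).
    destruct (Rle_dec 0 w'); [|split_Rabs; lra]. destruct (Rle_dec 0 w); [|lra].
    apply H'; [apply T1; auto| rewrite D1; lra | lra].
Qed.

End ModI.
Import ModI.

Module ModJ.
Open Scope R_scope.

Definition G1 (dl c b dm : R -> R) (u : bool -> R -> R -> R) (i : bool) (z w : R) : R :=
  if i then (- clp dl z) * u true z w + (- clp c z) * u false (- z) w
  else (- clp b (- z)) * u true (- z) w + clp dm (- z) * u false z w.
Definition g1 (lam mu b : R -> R) (i : bool) (w : R) : R :=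
  if i then 0 else clp b w / (clp lam w + clp mu w).
Definition G2 (dl c b dm : R -> R) (u : bool -> R -> R -> R) (i : bool) (z w : R) : R :=
  if i then clp dl (- z) * u true z w + clp c (- z) * u false (- z) w
  else clp b z * u true (- z) w + (- clp dm z) * u false z w.
Definition g2 (lam mu b : R -> R) (i : bool) (w : R) : R :=
  if i then 0 else clp b (- w) / (clp lam (- w) + clp mu (- w)).

Lemma pt_cont1 f : (forall x, continuity_pt f x) -> cont1 f.
Proof.
  intros H x eps He. specialize (H x).
  unfold continuity_pt, continue_in, limit1_in, limit_in in H.
  destruct (H eps He) as [d [Hd H']]. exists d; split; auto.
  intros y Hy. destruct (Req_dec y x) as [->|Hne].
  - rewrite Rminus_diag, Rabs_R0; auto.
  - apply (H' y). split; [split; [exact I|congruence]|]. simpl. unfold R_dist. auto.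
Qed.

Lemma cont1_opp f : cont1 f -> cont1 (fun x => - f x).
Proof.
  intros H x eps He. destruct (H x eps He) as [d [Hd H']]. exists d; split; auto.
  intros y Hy. replace (- f y - - f x) with (- (f y - f x)) by ring. rewrite Rabs_Ropp; auto.
Qed.

Lemma cont1_div f h : cont1 f -> cont1 h -> (forall x, 0 < h x) -> cont1 (fun x => f x / h x).
Proof.
  intros Hf Hh Hp. apply pt_cont1. intros x.
  apply (continuity_pt_div f h x); try apply cont1_pt; auto. pose proof (Hp x); lra.
Qed.

Lemma cont1_plus f h : cont1 f -> cont1 h -> cont1 (fun x => f x + h x).
Proof.
  intros Hf Hh. apply pt_cont1. intros x. apply continuity_pt_plus; apply cont1_pt; auto.
Qed.

Section Ops.
Variables lam dlam mu dmu b c : R -> R.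
Hypothesis Hlam : C1_on (-1) 1 lam dlam.
Hypothesis Hmu : C1_on (-1) 1 mu dmu.
Hypothesis Hlp : forall x, inI (-1) 1 x -> 0 < lam x.
Hypothesis Hmp : forall x, inI (-1) 1 x -> 0 < mu x.
Hypothesis Hb : cont_on (-1) 1 b.
Hypothesis Hc : cont_on (-1) 1 c.

Lemma lam_cont : cont_on (-1) 1 lam.
Proof. apply (hd_cont_on _ _ _ dlam). apply Hlam. Qed.
Lemma mu_cont : cont_on (-1) 1 mu.
Proof. apply (hd_cont_on _ _ _ dmu). apply Hmu. Qed.
Lemma dlam_cont : cont_on (-1) 1 dlam.
Proof. apply Hlam. Qed.
Lemma dmu_cont : cont_on (-1) 1 dmu.
Proof. apply Hmu. Qed.

Lemma clp_pos f : (forall x, inI (-1) 1 x -> 0 < f x) -> forall x, 0 < clp f x.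
Proof. intros H x. apply H. apply clamp_in; lra. Qed.

Lemma HG1_1 : forall u, (forall i, cont2 (u i)) -> forall i, cont2 (G1 dlam c b dmu u i).
Proof.
  intros u Hu [|]; unfold G1.
  - apply (cont2_plus (fun z w => (- clp dlam z) * u true z w) (fun z w => (- clp c z) * u false (- z) w)).
    + apply (cont2_mulz (fun z => - clp dlam z)); auto. apply cont1_opp, clp_cont1, dlam_cont.
    + apply (cont2_mulz (fun z => - clp c z) (fun z w => u false (- z) w)).
      * apply cont1_opp, clp_cont1; auto.
      * apply cont2_negz; auto.
  - apply (cont2_plus (fun z w => (- clp b (- z)) * u true (- z) w) (fun z w => clp dmu (- z) * u false z w)).
    + apply (cont2_mulz (fun z => - clp b (- z)) (fun z w => u true (- z) w)).
      * apply cont1_opp. apply (cont1_negarg (clp b)). apply clp_cont1; auto.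
      * apply cont2_negz; auto.
    + apply (cont2_mulz (fun z => clp dmu (- z))); auto. apply (cont1_negarg (clp dmu)), clp_cont1, dmu_cont.
Qed.

Lemma HG1_2 : forall u, (forall i, cont2 (u i)) -> forall i, cont2 (G2 dlam c b dmu u i).
Proof.
  intros u Hu [|]; unfold G2.
  - apply (cont2_plus (fun z w => clp dlam (- z) * u true z w) (fun z w => clp c (- z) * u false (- z) w)).
    + apply (cont2_mulz (fun z => clp dlam (- z))); auto. apply (cont1_negarg (clp dlam)), clp_cont1, dlam_cont.
    + apply (cont2_mulz (fun z => clp c (- z)) (fun z w => u false (- z) w)).
      * apply (cont1_negarg (clp c)), clp_cont1; auto.
      * apply cont2_negz; auto.
  - apply (cont2_plus (fun z w => clp b z * u true (- z) w) (fun z w => (- clp dmu z) * u false z w)).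
    + apply (cont2_mulz (clp b) (fun z w => u true (- z) w)).
      * apply clp_cont1; auto.
      * apply cont2_negz; auto.
    + apply (cont2_mulz (fun z => - clp dmu z)); auto. apply cont1_opp, clp_cont1, dmu_cont.
Qed.

Lemma Hg_1 : forall i, cont1 (g1 lam mu b i).
Proof.
  intros [|]; unfold g1.
  - intros x eps He. exists 1; split; [lra|]. intros. rewrite Rminus_diag, Rabs_R0; auto.
  - apply cont1_div. apply clp_cont1; auto.
    apply cont1_plus; apply clp_cont1; [apply lam_cont|apply mu_cont].
    intros x. pose proof (clp_pos lam Hlp x). pose proof (clp_pos mu Hmp x). lra.
Qed.

Lemma Hg_2 : forall i, cont1 (g2 lam mu b i).
Proof.
  intros [|]; unfold g2.
  - intros x eps He. exists 1; split; [lra|]. intros. rewrite Rminus_diag, Rabs_R0; auto.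
  - apply (cont1_div (fun x => clp b (- x)) (fun x => clp lam (- x) + clp mu (- x))).
    + apply (cont1_negarg (clp b)). apply clp_cont1; auto.
    + apply (cont1_plus (fun x => clp lam (- x)) (fun x => clp mu (- x))).
      * apply (cont1_negarg (clp lam)), clp_cont1, lam_cont.
      * apply (cont1_negarg (clp mu)), clp_cont1, mu_cont.
    + intros x. pose proof (clp_pos lam Hlp (- x)). pose proof (clp_pos mu Hmp (- x)). lra.
Qed.

Lemma HG2_all : exists C, 0 <= C /\
  (forall u v (rho : R -> R),
    (forall i z w, inT z w -> Rabs (u i z w - v i z w) <= rho w) ->
    forall i z w, inT z w -> Rabs (G1 dlam c b dmu u i z w - G1 dlam c b dmu v i z w) <= C * rho w) /\
  (forall u v (rho : R -> R),
    (forall i z w, inT z w -> Rabs (u i z w - v i z w) <= rho w) ->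
    forall i z w, inT z w -> Rabs (G2 dlam c b dmu u i z w - G2 dlam c b dmu v i z w) <= C * rho w).
Proof.
  destruct (clamp_bound dlam dlam_cont) as [B1 [P1 Q1]].
  destruct (clamp_bound c Hc) as [B2 [P2 Q2]].
  destruct (clamp_bound b Hb) as [B3 [P3 Q3]].
  destruct (clamp_bound dmu dmu_cont) as [B4 [P4 Q4]].
  assert (Q : forall f B, (forall x, Rabs (f (clamp (-1) 1 x)) <= B) -> forall x, Rabs (clp f x) <= B /\ Rabs (- clp f x) <= B).
  { intros f B H x. unfold clp. rewrite Rabs_Ropp. split; apply H. }
  exists (B1 + B2 + B3 + B4). split; [lra|split].
  - intros u v rho H [|] z w HP; unfold G1.
    + assert (R1 := H true z w HP). assert (R2 := H false (- z) w (inT_neg z w HP)).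
      assert (0 <= rho w) by (pose proof (Rabs_pos (u true z w - v true z w)); lra).
      replace ((- clp dlam z) * u true z w + (- clp c z) * u false (- z) w - ((- clp dlam z) * v true z w + (- clp c z) * v false (- z) w))
        with ((- clp dlam z) * (u true z w - v true z w) + (- clp c z) * (u false (- z) w - v false (- z) w)) by ring.
      eapply Rle_trans; [apply abs_lin; [apply (Q dlam B1 Q1 z)|apply (Q c B2 Q2 z)|exact R1|exact R2]|].
      nra.
    + assert (R1 := H true (- z) w (inT_neg z w HP)). assert (R2 := H false z w HP).
      assert (0 <= rho w) by (pose proof (Rabs_pos (u false z w - v false z w)); lra).
      replace ((- clp b (- z)) * u true (- z) w + clp dmu (- z) * u false z w - ((- clp b (- z)) * v true (- z) w + clp dmu (- z) * v false z w))
        with ((- clp b (- z)) * (u true (- z) w - v true (- z) w) + clp dmu (- z) * (u false z w - v false z w)) by ring.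
      eapply Rle_trans; [apply abs_lin; [apply (Q b B3 Q3 (- z))|apply (Q dmu B4 Q4 (- z))|exact R1|exact R2]|].
      nra.
  - intros u v rho H [|] z w HP; unfold G2.
    + assert (R1 := H true z w HP). assert (R2 := H false (- z) w (inT_neg z w HP)).
      assert (0 <= rho w) by (pose proof (Rabs_pos (u true z w - v true z w)); lra).
      replace (clp dlam (- z) * u true z w + clp c (- z) * u false (- z) w - (clp dlam (- z) * v true z w + clp c (- z) * v false (- z) w))
        with (clp dlam (- z) * (u true z w - v true z w) + clp c (- z) * (u false (- z) w - v false (- z) w)) by ring.
      eapply Rle_trans; [apply abs_lin; [apply (Q dlam B1 Q1 (- z))|apply (Q c B2 Q2 (- z))|exact R1|exact R2]|].
      nra.
    + assert (R1 := H true (- z) w (inT_neg z w HP)). assert (R2 := H false z w HP).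
      assert (0 <= rho w) by (pose proof (Rabs_pos (u false z w - v false z w)); lra).
      replace (clp b z * u true (- z) w + (- clp dmu z) * u false z w - (clp b z * v true (- z) w + (- clp dmu z) * v false z w))
        with (clp b z * (u true (- z) w - v true (- z) w) + (- clp dmu z) * (u false z w - v false z w)) by ring.
      eapply Rle_trans; [apply abs_lin; [apply (Q b B3 Q3 z)|apply (Q dmu B4 Q4 z)|exact R1|exact R2]|].
      nra.
Qed.

End Ops.

End ModJ.
Import ModJ.

Module ModK.
Open Scope R_scope.

Lemma eqR (x y : R) : x = y -> x = y.
Proof. auto. Qed.

Section SysExist.
Variables lam dlam mu dmu b c : R -> R.
Hypothesis Hsym : forall w, inI (-1) 1 w -> lam w = mu (- w).
Variables mL ML : R.
Hypothesis HaL : cont1 (clp lam).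
Hypothesis HmL : 0 < mL.
Hypothesis HbL : forall x, mL <= clp lam x <= ML.
Variables U1 U2 : bool -> R -> R -> R.
Hypothesis HU1c : forall i, cont_T (U1 i).
Hypothesis HU1s : forall i, char_sol_T (clp lam) (U1 i) (G1 dlam c b dmu U1 i).
Hypothesis HU1b : forall i w, 0 <= w <= 1 -> U1 i (- w) w = g1 lam mu b i w.
Hypothesis HU2c : forall i, cont_T (U2 i).
Hypothesis HU2s : forall i, char_sol_T (clp mu) (U2 i) (G2 dlam c b dmu U2 i).
Hypothesis HU2b : forall i w, 0 <= w <= 1 -> U2 i (- w) w = g2 lam mu b i w.

Definition Lg z w := if Rle_dec 0 w then U1 true z w else U2 true (- z) (- w).
Definition Kg z w := if Rle_dec 0 w then U1 false (- z) w else U2 false z (- w).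

Lemma U1t0 : U1 true 0 0 = 0.
Proof. pose proof (HU1b true 0 ltac:(lra)). rewrite Ropp_0 in H. rewrite H. reflexivity. Qed.
Lemma U2t0 : U2 true 0 0 = 0.
Proof. pose proof (HU2b true 0 ltac:(lra)). rewrite Ropp_0 in H. rewrite H. reflexivity. Qed.
Lemma Uf0 : U1 false 0 0 = U2 false 0 0.
Proof.
  pose proof (HU1b false 0 ltac:(lra)). pose proof (HU2b false 0 ltac:(lra)).
  rewrite Ropp_0 in H, H0. rewrite H, H0. unfold g1, g2. rewrite Ropp_0. reflexivity.
Qed.

Lemma L_pos z w : 0 <= w -> Lg z w = U1 true z w.
Proof. intros H. unfold Lg. destruct Rle_dec; [auto|lra]. Qed.
Lemma L_neg z w : inE z w -> w <= 0 -> Lg z w = U2 true (- z) (- w).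
Proof.
  intros HE H. unfold Lg. destruct Rle_dec; [|auto].
  assert (w = 0) by lra. subst w. assert (z = 0) by (apply inE_zero; auto). subst z.
  rewrite Ropp_0, U1t0, U2t0. auto.
Qed.
Lemma K_pos z w : 0 <= w -> Kg z w = U1 false (- z) w.
Proof. intros H. unfold Kg. destruct Rle_dec; [auto|lra]. Qed.
Lemma K_neg z w : inE z w -> w <= 0 -> Kg z w = U2 false z (- w).
Proof.
  intros HE H. unfold Kg. destruct Rle_dec; [|auto].
  assert (w = 0) by lra. subst w. assert (z = 0) by (apply inE_zero; auto). subst z.
  rewrite Ropp_0, Uf0. auto.
Qed.

Lemma Lg_cont : cont_on_E Lg.
Proof.
  assert (HG := glue_cont (U1 true) (U2 true) 1 (-1) Rabs_R1 ltac:(rewrite Rabs_left; lra)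
     (HU1c true) (HU2c true) ltac:(rewrite U1t0, U2t0; auto)).
  eapply cont_on_E_fext; [|exact HG].
  intros z w _. unfold Lg. destruct Rle_dec; f_equal; ring.
Qed.

Lemma Kg_cont : cont_on_E Kg.
Proof.
  assert (HG := glue_cont (U1 false) (U2 false) (-1) 1 ltac:(rewrite Rabs_left; lra) Rabs_R1
     (HU1c false) (HU2c false) Uf0).
  eapply cont_on_E_fext; [|exact HG].
  intros z w _. unfold Kg. destruct Rle_dec; f_equal; ring.
Qed.

Lemma Lg_bd : forall w, inI (-1) 1 w -> Lg (- w) w = 0.
Proof.
  intros w Hw. unfold Lg. destruct Rle_dec.
  - rewrite HU1b by (unfold inI in Hw; lra). reflexivity.
  - rewrite HU2b by (unfold inI in Hw; lra). reflexivity.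
Qed.

Lemma Kg_bd : forall w, inI (-1) 1 w -> Kg w w = b w / (lam w + mu w).
Proof.
  intros w Hw. unfold inI in Hw. unfold Kg. destruct Rle_dec.
  - rewrite HU1b by lra. unfold g1. rewrite !clp_id by lra. reflexivity.
  - replace (U2 false w (- w)) with (U2 false (- - w) (- w)) by (rewrite Ropp_involutive; auto).
    rewrite HU2b by lra. unfold g2. rewrite Ropp_involutive. rewrite !clp_id by lra. reflexivity.
Qed.

Lemma Haw_lam : forall x, -1 <= x <= 1 -> lam x = clp lam x.
Proof. intros. rewrite clp_id; auto. Qed.

Lemma Lg_char : char_solution lam lam Lg (fun z w => - dlam z * Lg z w - c z * Kg z w).
Proof.
  apply (char_glue lam lam (clp lam) mL ML HaL HmL HbL Haw_lam).
  - intros s0 s1 zc wc [Hs [Hz [Hw Hin]]] Hpos.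
    assert (Bz : forall s, inI s0 s1 s -> -1 <= zc s <= 1) by (intros s Hs'; apply (inE_box _ _ (Hin s Hs'))).
    assert (Bw : forall s, inI s0 s1 s -> -1 <= wc s <= 1) by (intros s Hs'; apply (inE_box _ _ (Hin s Hs'))).
    assert (HcT : char_curve_T (clp lam) s0 s1 zc wc).
    { refine (conj Hs (conj _ (conj _ _))).
      - apply (hd_same _ _ _ lam); auto. intros; rewrite clp_id; auto.
      - apply (hd_same _ _ _ lam); auto. intros; rewrite clp_id; auto.
      - intros s Hs'. apply inE_T; auto. }
    assert (HR := HU1s true s0 s1 zc wc HcT).
    rewrite (L_pos (zc s1)), (L_pos (zc s0)) by (apply Hpos; unfold inI; lra).
    eapply is_RInt_ext; [|exact HR]. intros x Hx. rewrite Rmin_left, Rmax_right in Hx by lra.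
    assert (Hx' : inI s0 s1 x) by (unfold inI; lra).
    unfold G1. rewrite (L_pos (zc x)), (K_pos (zc x)) by auto. rewrite !clp_id by auto. apply eqR; ring.
  - intros s0 s1 zc wc [Hs [Hz [Hw Hin]]] Hneg.
    assert (Bz : forall s, inI s0 s1 s -> -1 <= zc s <= 1) by (intros s Hs'; apply (inE_box _ _ (Hin s Hs'))).
    assert (Bw : forall s, inI s0 s1 s -> -1 <= wc s <= 1) by (intros s Hs'; apply (inE_box _ _ (Hin s Hs'))).
    assert (Hsm : forall x, -1 <= x <= 1 -> lam x = clp mu (- x)).
    { intros x Hx. rewrite clp_id by lra. apply Hsym. unfold inI; lra. }
    assert (HcT : char_curve_T (clp mu) (- s1) (- s0) (fun t => - zc (- t)) (fun t => - wc (- t))).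
    { refine (conj _ (conj _ (conj _ _))); [lra| | |].
      - apply (hd_revneg _ _ _ lam); auto.
      - apply (hd_revneg _ _ _ lam); auto.
      - intros t Ht. assert (Ht' : inI s0 s1 (- t)) by (unfold inI in *; lra).
        apply inT_neg. apply inE_Tn; auto. }
    assert (HR := rev_RInt _ s0 s1 _ (HU2s true (- s1) (- s0) _ _ HcT)).
    cbv beta in HR. rewrite !Ropp_involutive in HR.
    rewrite (L_neg (zc s1)), (L_neg (zc s0)) by (try apply Hin; try apply Hneg; unfold inI; lra).
    replace (U2 true (- zc s1) (- wc s1) - U2 true (- zc s0) (- wc s0)) with
      (- (U2 true (- zc s0) (- wc s0) - U2 true (- zc s1) (- wc s1))) by ring.
    eapply is_RInt_ext; [|exact HR]. intros x Hx. rewrite Rmin_left, Rmax_right in Hx by lra.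
    assert (Hx' : inI s0 s1 x) by (unfold inI; lra).
    cbv beta. rewrite !Ropp_involutive.
    unfold G2. rewrite ?Ropp_involutive.
    rewrite (L_neg (zc x)), (K_neg (zc x)) by auto. rewrite !clp_id by auto. apply eqR; ring.
Qed.

Lemma Kg_char : char_solution (fun z => - mu z) lam Kg (fun z w => - b z * Lg z w + dmu z * Kg z w).
Proof.
  apply (char_glue (fun z => - mu z) lam (clp lam) mL ML HaL HmL HbL Haw_lam).
  - intros s0 s1 zc wc [Hs [Hz [Hw Hin]]] Hpos.
    assert (Bz : forall s, inI s0 s1 s -> -1 <= zc s <= 1) by (intros s Hs'; apply (inE_box _ _ (Hin s Hs'))).
    assert (Bw : forall s, inI s0 s1 s -> -1 <= wc s <= 1) by (intros s Hs'; apply (inE_box _ _ (Hin s Hs'))).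
    assert (HcT : char_curve_T (clp lam) s0 s1 (fun s => - zc s) wc).
    { refine (conj Hs (conj _ (conj _ _))).
      - apply (hd_negB _ _ _ (fun z => - mu z)); auto.
        intros x Hx. rewrite clp_id by lra. rewrite Hsym by (unfold inI; lra). rewrite Ropp_involutive. auto.
      - apply (hd_same _ _ _ lam); auto. intros; rewrite clp_id; auto.
      - intros s Hs'. apply inT_neg. apply inE_T; auto. }
    assert (HR := HU1s false s0 s1 _ wc HcT).
    rewrite (K_pos (zc s1)), (K_pos (zc s0)) by (apply Hpos; unfold inI; lra).
    eapply is_RInt_ext; [|exact HR]. intros x Hx. rewrite Rmin_left, Rmax_right in Hx by lra.
    assert (Hx' : inI s0 s1 x) by (unfold inI; lra).
    unfold G1. rewrite ?Ropp_involutive. rewrite (L_pos (zc x)), (K_pos (zc x)) by auto. rewrite !clp_id by auto. apply eqR; ring.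
  - intros s0 s1 zc wc [Hs [Hz [Hw Hin]]] Hneg.
    assert (Bz : forall s, inI s0 s1 s -> -1 <= zc s <= 1) by (intros s Hs'; apply (inE_box _ _ (Hin s Hs'))).
    assert (Bw : forall s, inI s0 s1 s -> -1 <= wc s <= 1) by (intros s Hs'; apply (inE_box _ _ (Hin s Hs'))).
    assert (Hsm : forall x, -1 <= x <= 1 -> lam x = clp mu (- x)).
    { intros x Hx. rewrite clp_id by lra. apply Hsym. unfold inI; lra. }
    assert (HcT : char_curve_T (clp mu) (- s1) (- s0) (fun t => zc (- t)) (fun t => - wc (- t))).
    { refine (conj _ (conj _ (conj _ _))); [lra| | |].
      - apply (hd_revpos _ _ _ (fun z => - mu z)); auto. intros x Hx. rewrite clp_id; auto.
      - apply (hd_revneg _ _ _ lam); auto.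
      - intros t Ht. assert (Ht' : inI s0 s1 (- t)) by (unfold inI in *; lra).
        apply inE_Tn; auto. }
    assert (HR := rev_RInt _ s0 s1 _ (HU2s false (- s1) (- s0) _ _ HcT)).
    cbv beta in HR. rewrite !Ropp_involutive in HR.
    rewrite (K_neg (zc s1)), (K_neg (zc s0)) by (try apply Hin; try apply Hneg; unfold inI; lra).
    replace (U2 false (zc s1) (- wc s1) - U2 false (zc s0) (- wc s0)) with
      (- (U2 false (zc s0) (- wc s0) - U2 false (zc s1) (- wc s1))) by ring.
    eapply is_RInt_ext; [|exact HR]. intros x Hx. rewrite Rmin_left, Rmax_right in Hx by lra.
    assert (Hx' : inI s0 s1 x) by (unfold inI; lra).
    cbv beta. rewrite !Ropp_involutive.
    unfold G2. rewrite ?Ropp_involutive.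
    rewrite (L_neg (zc x)), (K_neg (zc x)) by auto. rewrite !clp_id by auto. apply eqR; ring.
Qed.

End SysExist.

End ModK.
Import ModK.

Module ModL.
Open Scope R_scope.

Lemma inE_negz z w : inE z w -> inE (- z) w.
Proof. intros [H1 [H2 H3]]. split; [lra|split; [lra|]]. rewrite Rabs_Ropp; auto. Qed.

Section SysUniq.
Variables lam dlam mu dmu b c : R -> R.
Hypothesis Hsym : forall w, inI (-1) 1 w -> lam w = mu (- w).
Variables L K : R -> R -> R.
Hypothesis HLc : cont_on_E L.
Hypothesis HKc : cont_on_E K.
Hypothesis HLs : char_solution lam lam L (fun z w => - dlam z * L z w - c z * K z w).
Hypothesis HKs : char_solution (fun z => - mu z) lam K (fun z w => - b z * L z w + dmu z * K z w).
Hypothesis HLb : forall w, inI (-1) 1 w -> L (- w) w = 0.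
Hypothesis HKb : forall w, inI (-1) 1 w -> K w w = b w / (lam w + mu w).

Definition V1 : bool -> R -> R -> R := fun i => if i then L else (fun z w => K (- z) w).
Definition V2 : bool -> R -> R -> R := fun i => if i then (fun z w => L (- z) (- w)) else (fun z w => K z (- w)).

Lemma V1_cont : forall i, cont_T (V1 i).
Proof.
  intros [|]; simpl.
  - assert (HC := cont_on_E_T L 1 1 Rabs_R1 Rabs_R1
      ltac:(intros z w HP; rewrite !Rmult_1_l; apply inT_E; auto) HLc).
    eapply cont_T_fext; [|exact HC]. intros; cbv beta; rewrite !Rmult_1_l; auto.
  - assert (HC := cont_on_E_T K (-1) 1 ltac:(rewrite Rabs_left; lra) Rabs_R1
      ltac:(intros z w HP; replace (-1 * z) with (- z) by ring; rewrite Rmult_1_l; apply inE_negz, inT_E; auto) HKc).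
    eapply cont_T_fext; [|exact HC]. intros; cbv beta; f_equal; ring.
Qed.

Lemma V2_cont : forall i, cont_T (V2 i).
Proof.
  intros [|]; simpl.
  - assert (HC := cont_on_E_T L (-1) (-1) ltac:(rewrite Rabs_left; lra) ltac:(rewrite Rabs_left; lra)
      ltac:(intros z w HP; replace (-1 * z) with (- z) by ring; replace (-1 * w) with (- w) by ring;
            apply inE_negz, inT_En; auto) HLc).
    eapply cont_T_fext; [|exact HC]. intros; cbv beta; f_equal; ring.
  - assert (HC := cont_on_E_T K 1 (-1) Rabs_R1 ltac:(rewrite Rabs_left; lra)
      ltac:(intros z w HP; replace (-1 * w) with (- w) by ring; rewrite Rmult_1_l; apply inT_En; auto) HKc).
    eapply cont_T_fext; [|exact HC]. intros; cbv beta; f_equal; ring.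
Qed.

Lemma V1_char : forall i, char_sol_T (clp lam) (V1 i) (G1 dlam c b dmu V1 i).
Proof.
  intros [|] s0 s1 zc wc [Hs [Hz [Hw Hin]]].
  - assert (Bz : forall s, inI s0 s1 s -> -1 <= zc s <= 1) by (intros s Hs'; apply (inE_box _ _ (inT_E _ _ (Hin s Hs')))).
    assert (Bw : forall s, inI s0 s1 s -> -1 <= wc s <= 1) by (intros s Hs'; apply (inE_box _ _ (inT_E _ _ (Hin s Hs')))).
    assert (Hcc : char_curve lam lam s0 s1 zc wc).
    { refine (conj Hs (conj _ (conj _ _))).
      - apply (hd_same s0 s1 zc (clp lam) lam); auto. intros; rewrite clp_id; auto.
      - apply (hd_same s0 s1 wc (clp lam) lam); auto. intros; rewrite clp_id; auto.
      - intros s Hs'. apply inT_E; auto. }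
    assert (HR := HLs s0 s1 zc wc Hcc).
    eapply is_RInt_ext; [|exact HR]. intros x Hx. rewrite Rmin_left, Rmax_right in Hx by lra.
    assert (Hx' : inI s0 s1 x) by (unfold inI; lra).
    unfold G1, V1. rewrite Ropp_involutive. rewrite !clp_id by auto. apply eqR; ring.
  - assert (Bz : forall s, inI s0 s1 s -> -1 <= zc s <= 1) by (intros s Hs'; apply (inE_box _ _ (inT_E _ _ (Hin s Hs')))).
    assert (Bw : forall s, inI s0 s1 s -> -1 <= wc s <= 1) by (intros s Hs'; apply (inE_box _ _ (inT_E _ _ (Hin s Hs')))).
    assert (Hcc : char_curve (fun z => - mu z) lam s0 s1 (fun s => - zc s) wc).
    { refine (conj Hs (conj _ (conj _ _))).
      - apply (hd_negB s0 s1 zc (clp lam) (fun z => - mu z)); auto. intros x Hx. rewrite clp_id by auto.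
        rewrite Hsym by (unfold inI; lra). ring.
      - apply (hd_same s0 s1 wc (clp lam) lam); auto. intros; rewrite clp_id; auto.
      - intros s Hs'. apply inE_negz, inT_E; auto. }
    assert (HR := HKs s0 s1 _ wc Hcc).
    eapply is_RInt_ext; [|exact HR]. intros x Hx. rewrite Rmin_left, Rmax_right in Hx by lra.
    assert (Hx' : inI s0 s1 x) by (unfold inI; lra).
    unfold G1, V1. rewrite !clp_id by (pose proof (Bz x Hx'); lra). apply eqR; ring.
Qed.

Lemma V2_char : forall i, char_sol_T (clp mu) (V2 i) (G2 dlam c b dmu V2 i).
Proof.
  intros [|] t0 t1 Zc Wc [Hs [Hz [Hw Hin]]].
  - assert (Bz : forall s, inI t0 t1 s -> -1 <= Zc s <= 1) by (intros s Hs'; apply (inE_box _ _ (inT_E _ _ (Hin s Hs')))).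
    assert (Bw : forall s, inI t0 t1 s -> -1 <= Wc s <= 1) by (intros s Hs'; apply (inE_box _ _ (inT_E _ _ (Hin s Hs')))).
    assert (Hms : forall x, -1 <= x <= 1 -> clp mu x = lam (- x)).
    { intros x Hx. rewrite clp_id by auto. rewrite Hsym by (unfold inI; lra). rewrite Ropp_involutive; auto. }
    assert (Hcc : char_curve lam lam (- t1) (- t0) (fun s => - Zc (- s)) (fun s => - Wc (- s))).
    { refine (conj _ (conj _ (conj _ _))); [lra| | |].
      - apply (hd_revneg t0 t1 Zc (clp mu) lam); auto.
      - apply (hd_revneg t0 t1 Wc (clp mu) lam); auto.
      - intros s Hs'. assert (Hs'' : inI t0 t1 (- s)) by (unfold inI in *; lra).
        apply inE_negz, inT_En; auto. }
    assert (HR := rev_RInt _ t0 t1 _ (HLs _ _ _ _ Hcc)).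
    cbv beta in HR. rewrite !Ropp_involutive in HR.
    replace (V2 true (Zc t1) (Wc t1) - V2 true (Zc t0) (Wc t0)) with
      (- (L (- Zc t0) (- Wc t0) - L (- Zc t1) (- Wc t1))) by (simpl; ring).
    eapply is_RInt_ext; [|exact HR]. intros x Hx. rewrite Rmin_left, Rmax_right in Hx by lra.
    assert (Hx' : inI t0 t1 x) by (unfold inI; lra).
    cbv beta. rewrite !Ropp_involutive.
    unfold G2, V2. rewrite !clp_id by (pose proof (Bz x Hx'); lra). apply eqR; ring.
  - assert (Bz : forall s, inI t0 t1 s -> -1 <= Zc s <= 1) by (intros s Hs'; apply (inE_box _ _ (inT_E _ _ (Hin s Hs')))).
    assert (Bw : forall s, inI t0 t1 s -> -1 <= Wc s <= 1) by (intros s Hs'; apply (inE_box _ _ (inT_E _ _ (Hin s Hs')))).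
    assert (Hms : forall x, -1 <= x <= 1 -> clp mu x = lam (- x)).
    { intros x Hx. rewrite clp_id by auto. rewrite Hsym by (unfold inI; lra). rewrite Ropp_involutive; auto. }
    assert (Hcc : char_curve (fun z => - mu z) lam (- t1) (- t0) (fun s => Zc (- s)) (fun s => - Wc (- s))).
    { refine (conj _ (conj _ (conj _ _))); [lra| | |].
      - apply (hd_revpos t0 t1 Zc (clp mu) (fun z => - mu z)); auto. intros x Hx. rewrite clp_id by auto. ring.
      - apply (hd_revneg t0 t1 Wc (clp mu) lam); auto.
      - intros s Hs'. assert (Hs'' : inI t0 t1 (- s)) by (unfold inI in *; lra).
        apply inT_En; auto. }
    assert (HR := rev_RInt _ t0 t1 _ (HKs _ _ _ _ Hcc)).
    cbv beta in HR. rewrite !Ropp_involutive in HR.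
    replace (V2 false (Zc t1) (Wc t1) - V2 false (Zc t0) (Wc t0)) with
      (- (K (Zc t0) (- Wc t0) - K (Zc t1) (- Wc t1))) by (simpl; ring).
    eapply is_RInt_ext; [|exact HR]. intros x Hx. rewrite Rmin_left, Rmax_right in Hx by lra.
    assert (Hx' : inI t0 t1 x) by (unfold inI; lra).
    cbv beta. rewrite ?Ropp_involutive.
    unfold G2, V2. rewrite !Ropp_involutive. rewrite !clp_id by (pose proof (Bz x Hx'); lra). apply eqR; ring.
Qed.

Lemma V1_bd : forall i w, 0 <= w <= 1 -> V1 i (- w) w = g1 lam mu b i w.
Proof.
  intros [|] w Hw; simpl.
  - apply HLb. unfold inI; lra.
  - rewrite Ropp_involutive. rewrite HKb by (unfold inI; lra). rewrite !clp_id by lra. auto.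
Qed.

Lemma V2_bd : forall i w, 0 <= w <= 1 -> V2 i (- w) w = g2 lam mu b i w.
Proof.
  intros [|] w Hw; simpl.
  - rewrite Ropp_involutive. replace w with (- - w) at 1 by ring. apply HLb. unfold inI; lra.
  - rewrite HKb by (unfold inI; lra). rewrite !clp_id by lra. auto.
Qed.

End SysUniq.

End ModL.
Import ModL.

Module ModM.
Open Scope R_scope.

Definition Psys (lam dlam mu dmu b c : R -> R) (L K : R -> R -> R) : Prop :=
  cont_on_E L /\ cont_on_E K /\
  char_solution lam lam L (fun z w => - dlam z * L z w - c z * K z w) /\
  char_solution (fun z => - mu z) lam K (fun z w => - b z * L z w + dmu z * K z w) /\
  (forall w, inI (-1) 1 w -> L (- w) w = 0) /\
  (forall w, inI (-1) 1 w -> K w w = b w / (lam w + mu w)).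

Lemma system (lam dlam mu dmu b c : R -> R)
  (Hlam : C1_on (-1) 1 lam dlam) (Hmu : C1_on (-1) 1 mu dmu)
  (Hlp : forall x, inI (-1) 1 x -> 0 < lam x)
  (Hmp : forall x, inI (-1) 1 x -> 0 < mu x)
  (Hsym : forall w, inI (-1) 1 w -> lam w = mu (- w))
  (Hb : cont_on (-1) 1 b) (Hc : cont_on (-1) 1 c) :
  (exists L K, Psys lam dlam mu dmu b c L K) /\
  (forall L K L' K', Psys lam dlam mu dmu b c L K -> Psys lam dlam mu dmu b c L' K' ->
     forall z w, inE z w -> L z w = L' z w /\ K z w = K' z w).
Proof.
  destruct (pos_bounds lam (lam_cont lam dlam Hlam) Hlp) as [mL [ML [HmL HbL]]].
  destruct (pos_bounds mu (mu_cont mu dmu Hmu) Hmp) as [mU [MU [HmU HbU]]].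
  assert (HaL : cont1 (clp lam)) by (apply clp_cont1, (lam_cont lam dlam Hlam)).
  assert (HaU : cont1 (clp mu)) by (apply clp_cont1, (mu_cont mu dmu Hmu)).
  destruct (HG2_all lam dlam mu dmu b c Hlam Hmu Hb Hc) as [C [HC [HG21 HG22]]].
  destruct (core_thm (clp lam) mL ML HaL HmL HbL (G1 dlam c b dmu) (g1 lam mu b)
     (HG1_1 lam dlam mu dmu b c Hlam Hmu Hb Hc) (Hg_1 lam dlam mu dmu b Hlam Hmu Hlp Hmp Hb) C HC HG21)
     as [[U1 [HU1c [HU1s HU1b]]] Uniq1].
  destruct (core_thm (clp mu) mU MU HaU HmU HbU (G2 dlam c b dmu) (g2 lam mu b)
     (HG1_2 lam dlam mu dmu b c Hlam Hmu Hb Hc) (Hg_2 lam dlam mu dmu b Hlam Hmu Hlp Hmp Hb) C HC HG22)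
     as [[U2 [HU2c [HU2s HU2b]]] Uniq2].
  split.
  - exists (Lg U1 U2), (Kg U1 U2). unfold Psys.
    refine (conj _ (conj _ (conj _ (conj _ (conj _ _))))).
    + apply (Lg_cont lam mu b U1 U2 HU1c HU1b HU2c HU2b).
    + apply (Kg_cont lam mu b U1 U2 HU1c HU1b HU2c HU2b).
    + apply (Lg_char lam dlam mu dmu b c Hsym mL ML HaL HmL HbL U1 U2 HU1s HU1b HU2s HU2b).
    + apply (Kg_char lam dlam mu dmu b c Hsym mL ML HaL HmL HbL U1 U2 HU1s HU1b HU2s HU2b).
    + apply (Lg_bd lam mu b U1 U2 HU1b HU2b).
    + apply (Kg_bd lam mu b U1 U2 HU1b HU2b).
  - intros L K L' K' [C1 [C2 [S1 [S2 [B1 B2]]]]] [C1' [C2' [S1' [S2' [B1' B2']]]]] z w HE.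
    assert (E1 := Uniq1 (V1 L K) (V1 L' K')
      (V1_cont L K C1 C2) (V1_char lam dlam mu dmu b c Hsym L K S1 S2) (V1_bd lam mu b L K B1 B2)
      (V1_cont L' K' C1' C2') (V1_char lam dlam mu dmu b c Hsym L' K' S1' S2') (V1_bd lam mu b L' K' B1' B2')).
    assert (E2 := Uniq2 (V2 L K) (V2 L' K')
      (V2_cont L K C1 C2) (V2_char lam dlam mu dmu b c Hsym L K S1 S2) (V2_bd lam mu b L K B1 B2)
      (V2_cont L' K' C1' C2') (V2_char lam dlam mu dmu b c Hsym L' K' S1' S2') (V2_bd lam mu b L' K' B1' B2')).
    destruct (Rle_dec 0 w) as [Hw|Hw].
    + split.
      * exact (E1 true z w (inE_T z w HE Hw)).
      * pose proof (E1 false (- z) w (inT_neg _ _ (inE_T z w HE Hw))) as H. simpl in H.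
        rewrite Ropp_involutive in H. exact H.
    + split.
      * pose proof (E2 true (- z) (- w) (inT_neg _ _ (inE_Tn z w HE ltac:(lra)))) as H. simpl in H.
        rewrite !Ropp_involutive in H. exact H.
      * pose proof (E2 false z (- w) (inE_Tn z w HE ltac:(lra))) as H. simpl in H.
        rewrite !Ropp_involutive in H. exact H.
Qed.

Lemma char_sol_fext az aw L F F' : (forall z w, F z w = F' z w) ->
  char_solution az aw L F -> char_solution az aw L F'.
Proof.
  intros E H s0 s1 zc wc Hc. eapply is_RInt_ext; [|exact (H s0 s1 zc wc Hc)].
  intros; apply E.
Qed.

Lemma cont_on_opp f : cont_on (-1) 1 f -> cont_on (-1) 1 (fun z => - f z).
Proof.
  intros H x Hx eps He. destruct (H x Hx eps He) as [d [Hd H']]. exists d; split; auto.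
  intros y Hy Hxy. replace (- f y - - f x) with (- (f y - f x)) by ring. rewrite Rabs_Ropp; auto.
Qed.


End ModM.
Import ModM.

Theorem theorem1 (lam dlam mu dmu b c : R -> R)
  (Hlam : C1_on (-1) 1 lam dlam) (Hmu : C1_on (-1) 1 mu dmu)
  (Hlam_pos : forall x, inI (-1) 1 x -> 0 < lam x)
  (Hmu_pos : forall x, inI (-1) 1 x -> 0 < mu x)
  (Hsym : forall w, inI (-1) 1 w -> lam w = mu (- w))
  (Hb : cont_on (-1) 1 b) (Hc : cont_on (-1) 1 c) :
  (exists L11 L12 L21 L22 : R -> R -> R,
      is_solution lam dlam mu dmu b c L11 L12 L21 L22) /\
  (forall L11 L12 L21 L22 M11 M12 M21 M22 : R -> R -> R,
      is_solution lam dlam mu dmu b c L11 L12 L21 L22 ->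
      is_solution lam dlam mu dmu b c M11 M12 M21 M22 ->
      forall z w, inE z w ->
        L11 z w = M11 z w /\ L12 z w = M12 z w /\
        L21 z w = M21 z w /\ L22 z w = M22 z w).
Proof.
  assert (Hsym2 : forall w, inI (-1) 1 w -> mu w = lam (- w)).
  { intros w Hw. rewrite Hsym by (unfold inI in *; lra). rewrite Ropp_involutive; auto. }
  assert (S1 := system lam dlam mu dmu b c Hlam Hmu Hlam_pos Hmu_pos Hsym Hb Hc).
  assert (S2 := system mu dmu lam dlam (fun z => - c z) (fun z => - b z) Hmu Hlam Hmu_pos Hlam_pos Hsym2
     (cont_on_opp c Hc) (cont_on_opp b Hb)).
  assert (Hpos : forall w, inI (-1) 1 w -> lam w + mu w <> 0).
  { intros w Hw. pose proof (Hlam_pos w Hw). pose proof (Hmu_pos w Hw). lra. }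
  split.
  - destruct S1 as [[L11 [L12 [P1 [P2 [P3 [P4 [P5 P6]]]]]]] _].
    destruct S2 as [[L22 [L21 [Q1 [Q2 [Q3 [Q4 [Q5 Q6]]]]]]] _].
    exists L11, L12, L21, L22. unfold is_solution.
    refine (conj P1 (conj P2 (conj Q2 (conj Q1 (conj P3 (conj P4 (conj _ (conj _ (conj P5 (conj P6 (conj Q5 _))))))))))).
    + eapply char_sol_fext; [|exact Q3]. intros; cbv beta; ring.
    + eapply char_sol_fext; [|exact Q4]. intros; cbv beta; ring.
    + intros w Hw. rewrite Q6 by auto. pose proof (Hlam_pos w Hw). pose proof (Hmu_pos w Hw). field; try split; lra.
  - destruct S1 as [_ U1]. destruct S2 as [_ U2].
    intros L11 L12 L21 L22 M11 M12 M21 M22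
      [A1 [A2 [A3 [A4 [A5 [A6 [A7 [A8 [A9 [A10 [A11 A12]]]]]]]]]]]
      [B1 [B2 [B3 [B4 [B5 [B6 [B7 [B8 [B9 [B10 [B11 B12]]]]]]]]]]] z w HE.
    assert (PA : Psys lam dlam mu dmu b c L11 L12) by (repeat split; auto).
    assert (PB : Psys lam dlam mu dmu b c M11 M12) by (repeat split; auto).
    assert (Hq : forall w, inI (-1) 1 w -> - (c w / (lam w + mu w)) = - c w / (mu w + lam w)).
    { intros w0 Hw0. pose proof (Hlam_pos w0 Hw0). pose proof (Hmu_pos w0 Hw0). field; try split; lra. }
    assert (QA : Psys mu dmu lam dlam (fun z => - c z) (fun z => - b z) L22 L21).
    { refine (conj A4 (conj A3 (conj _ (conj _ (conj A11 _))))).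
      - eapply char_sol_fext; [|exact A7]. intros; cbv beta; ring.
      - eapply char_sol_fext; [|exact A8]. intros; cbv beta; ring.
      - intros w0 Hw0. rewrite A12 by auto. apply Hq; auto. }
    assert (QB : Psys mu dmu lam dlam (fun z => - c z) (fun z => - b z) M22 M21).
    { refine (conj B4 (conj B3 (conj _ (conj _ (conj B11 _))))).
      - eapply char_sol_fext; [|exact B7]. intros; cbv beta; ring.
      - eapply char_sol_fext; [|exact B8]. intros; cbv beta; ring.
      - intros w0 Hw0. rewrite B12 by auto. apply Hq; auto. }
    destruct (U1 _ _ _ _ PA PB z w HE) as [E1 E2].
    destruct (U2 _ _ _ _ QA QB z w HE) as [E3 E4].
    auto.
Qed.
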